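(* Assume Non-Degeneracy Assumption I. Let $(B_1,\dots,B_N;\mathcal{K}_0,\mathcal{J}_0,\mathcal{K}_{N+1},\mathcal{J}_{N+1})$ be a base sequence, and let the boundary values $\mathbf{u}^0,\mathbf{u}^N,x^0,\mathbf{x}^N,\mathbf{p}^0,\mathbf{p}^N,q^N,\mathbf{q}^0$ and interval lengths $\tau_1,\dots,\tau_N$ form a solution of the base-sequence system (a)–(e). Suppose that all boundary values $\mathbf{u}^0,\mathbf{u}^N,x^0,\mathbf{x}^N,\mathbf{p}^0,\mathbf{p}^N,q^N,\mathbf{q}^0$ are $\ge 0$, all $\tau_n\ge 0$, and all breakpoint state values $x^n$ and $q^n$, $n=0,1,\dots,N$, are $\ge 0$. Then the constructed functions $U$ and $P$ are optimal solutions of M-CLP and M-CLP$^*$ respectively.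
   Context: Let $A$ be a real $K\times J$ matrix, $\beta,b\in\mathbb{R}^K$, $\gamma,c\in\mathbb{R}^J$, $T>0$. M-CLP is the problem: maximize $\int_{0-}^T(\gamma+(T-t)c)^\top dU(t)$ (Lebesgue–Stieltjes, the jump $U(0)$ at $0$ included) over $U:[0,T]\to\mathbb{R}^J$ that are nonnegative, non-decreasing and right-continuous with $U(0-)=0$, subject to $AU(t)\le\beta+bt$ for all $0\le t\le T$. Its symmetric dual M-CLP$^*$ is: minimize $\int_{0-}^T(\beta+(T-t)b)^\top dP(t)$ over $P:[0,T]\to\mathbb{R}^K$ nonnegative, non-decreasing, right-continuous with $P(0-)=0$, subject to $A^\top P(t)\ge\gamma+ct$ for all $0\le t\le T$. The primal and dual states (slacks) are $x(t)=\beta+bt-AU(t)$ and $q(t)=A^\top P(t)-\gamma-ct$; the dual is viewed as running in reversed time ($P(T-t)$ corresponds to $U(t)$). Non-Degeneracy Assumption I: $b$ is not a linear combination of fewer than $K$ columns of the matrix $[A\ I]$, and $c$ is not a linear combination of fewer than $J$ columns of $[A^\top\ I]$. Bases (of the Rates-LP). Consider the systems $Au+\dot x=b$ (unknowns $u\in\mathbb{R}^J,\dot x\in\mathbb{R}^K$) and $A^\top p-\dot q=c$ (unknowns $p\in\mathbb{R}^K,\dot q\in\mathbb{R}^J$). A basis $B$ is given by index sets $\mathcal{K}\subseteq\{1,\dots,K\}$, $\mathcal{J}\subseteq\{1,\dots,J\}$ such that the primal basic variables $\dot x_k$ ($k\in\mathcal{K}$) and $u_j$ ($j\notin\mathcal{J}$)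 are $K$ in number with linearly independent columns in $[A\ I]$. Its primal basic solution is the unique solution of $Au+\dot x=b$ with $u_j=0$ ($j\in\mathcal{J}$), $\dot x_k=0$ ($k\notin\mathcal{K}$); its complementary dual basic solution is the unique solution of $A^\top p-\dot q=c$ with $p_k=0$ ($k\in\mathcal{K}$), $\dot q_j=0$ ($j\notin\mathcal{J}$) (dual basic variables $p_k$, $k\notin\mathcal{K}$, and $\dot q_j$, $j\in\mathcal{J}$). $B$ is admissible if $u\ge0$ and $p\ge0$. Bases $B_n,B_{n+1}$ are adjacent if one is obtained from the other by a single pivot: one primal basic variable $v_n$ leaves and one variable $w_n$ enters. Base sequence: an integer $N\ge1$, admissible bases $B_1,\dots,B_N$ with index sets $(\mathcal{K}_n,\mathcal{J}_n)$, $B_n$ and $B_{n+1}$ adjacent for $n=1,\dots,N-1$, with primal/dual basic solutions (rates) $u^n,\dot x^n,p^n,\dot q^n$; together with index sets $\mathcal{K}_0,\mathcal{K}_{N+1}\subseteq\{1,\dots,K\}$, $\mathcal{J}_0,\mathcal{J}_{N+1}\subseteq\{1,\dots,J\}$ satisfying the compatibility conditions $\mathcal{K}_0\subseteq\mathcal{K}_1$ and $\mathcal{J}_{N+1}\subseteq\mathcal{J}_N$. Base-sequence system. Unknowns: $\mathbf{u}^0,\mathbf{u}^N,q^N,\mathbf{q}^0\in\mathbb{R}^J$, $x^0,\mathbf{x}^N,\mathbf{p}^0,\mathbf{p}^N\in\mathbb{R}^K$, $\tau_1,\dots,\tau_N\in\mathbb{R}$. Write $x^n=x^0+\sum_{m=1}^n\dot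 x^m\tau_m$ and $q^n=q^N+\sum_{m=n+1}^N\dot q^m\tau_m$ for $n=0,\dots,N$. Equations: (a) for $n=1,\dots,N-1$: if $v_n=\dot x_k$ then $x^n_k=0$; if $v_n=u_j$ then $q^n_j=0$; (b) $\sum_{n=1}^N\tau_n=T$; (c) $\mathbf{u}^0_j=0$ for $j\in\mathcal{J}_0$, $x^0_k=0$ for $k\notin\mathcal{K}_0$, $\mathbf{p}^0_k=0$ for $k\in\mathcal{K}_0$, $\mathbf{q}^0_j=0$ for $j\notin\mathcal{J}_0$, $\mathbf{p}^N_k=0$ for $k\in\mathcal{K}_{N+1}$, $q^N_j=0$ for $j\notin\mathcal{J}_{N+1}$, $\mathbf{u}^N_j=0$ for $j\in\mathcal{J}_{N+1}$, $\mathbf{x}^N_k=0$ for $k\notin\mathcal{K}_{N+1}$; (d) $A\mathbf{u}^0+x^0=\beta$, $A^\top\mathbf{p}^N-q^N=\gamma$; (e) $A\mathbf{u}^N+\mathbf{x}^N-x^N=0$, $A^\top\mathbf{p}^0-\mathbf{q}^0+q^0=0$. Constructed functions: $t_0=0$, $t_n=\tau_1+\dots+\tau_n$; $u(t)=u^n$ for $t\in(t_{n-1},t_n)$; $U(t)=\mathbf{u}^0+\int_0^tu(s)ds$ for $0\le t<T$, $U(T)=\mathbf{u}^0+\int_0^Tu(s)ds+\mathbf{u}^N$; $p(s)=p^n$ for $s\in(T-t_n,T-t_{n-1})$; $P(s)=\mathbf{p}^N+\int_0^sp(r)dr$ for $0\le s<T$, $P(T)=\mathbf{p}^N+\int_0^Tp(r)dr+\mathbf{p}^0$.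 *)

(* Defs.v *)
(* classical reals. Vectors are functions nat -> R (only the
   indices below the relevant dimension matter); a K x J matrix is
   nat -> nat -> R with entries A k j. *)
From Stdlib Require Import Reals.
Open Scope R_scope.

Fixpoint rsum (n : nat) (f : nat -> R) : R :=
  match n with O => 0 | S m => rsum m f + f m end.

Fixpoint cnt (n : nat) (P : nat -> bool) : nat :=
  match n with O => O | S m => (cnt m P + (if P m then 1 else 0))%nat end.

Definition tagged_partition (a b : R) (m : nat) (s xi : nat -> R) (delta : R) : Prop :=
  s O = a /\ s m = b /\
  (forall i, (i < m)%nat -> s i <= xi i <= s (S i) /\ s (S i) - s i < delta).

Definition RS_sum (n : nat) (f F : R -> nat -> R) (m : nat) (s xi : nat -> R) : R :=
  rsum m (fun i => rsum n (fun j => f (xi i) j * (F (s (S i)) j - F (s i) j))).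

Definition RS_int (n : nat) (f F : R -> nat -> R) (a b I : R) : Prop :=
  forall eps, eps > 0 -> exists delta, delta > 0 /\
    forall m s xi, tagged_partition a b m s xi delta ->
      Rabs (RS_sum n f F m s xi - I) < eps.

(* I = int_{0-}^T f(t)^T dF(t), with F(0-) = 0, i.e. the jump F(0) at 0 is
   included: I = f(0)^T F(0) + RS-int over [0,T]. *)
Definition LS_int0 (n : nat) (f F : R -> nat -> R) (T I : R) : Prop :=
  exists I0, RS_int n f F 0 T I0 /\ I = rsum n (fun j => f 0 j * F 0 j) + I0.

Definition nonneg_on (n : nat) (T : R) (F : R -> nat -> R) : Prop :=
  forall t j, 0 <= t <= T -> (j < n)%nat -> 0 <= F t j.

Definition nondecr_on (n : nat) (T : R) (F : R -> nat -> R) : Prop :=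
  forall t1 t2 j, 0 <= t1 -> t1 <= t2 -> t2 <= T -> (j < n)%nat -> F t1 j <= F t2 j.

Definition rcont_on (n : nat) (T : R) (F : R -> nat -> R) : Prop :=
  forall t j, 0 <= t < T -> (j < n)%nat ->
    forall eps, eps > 0 -> exists delta, delta > 0 /\
      forall t', t <= t' < t + delta -> t' <= T -> Rabs (F t' j - F t j) < eps.

Definition MCLP_feasible (K J : nat) (A : nat -> nat -> R) (beta b : nat -> R)
  (T : R) (U : R -> nat -> R) : Prop :=
  nonneg_on J T U /\ nondecr_on J T U /\ rcont_on J T U /\
  (forall t k, 0 <= t <= T -> (k < K)%nat ->
     rsum J (fun j => A k j * U t j) <= beta k + b k * t).

Definition MCLP_value (J : nat) (gamma c : nat -> R) (T : R) (U : R -> nat -> R) (I : R) : Prop :=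
  LS_int0 J (fun t j => gamma j + (T - t) * c j) U T I.

Definition MCLP_optimal (K J : nat) (A : nat -> nat -> R) (beta b gamma c : nat -> R)
  (T : R) (U : R -> nat -> R) : Prop :=
  MCLP_feasible K J A beta b T U /\
  exists I, MCLP_value J gamma c T U I /\
    forall U' I', MCLP_feasible K J A beta b T U' -> MCLP_value J gamma c T U' I' -> I' <= I.

Definition MCLPd_feasible (K J : nat) (A : nat -> nat -> R) (gamma c : nat -> R)
  (T : R) (P : R -> nat -> R) : Prop :=
  nonneg_on K T P /\ nondecr_on K T P /\ rcont_on K T P /\
  (forall t j, 0 <= t <= T -> (j < J)%nat ->
     rsum K (fun k => A k j * P t k) >= gamma j + c j * t).

Definition MCLPd_value (K : nat) (beta b : nat -> R) (T : R) (P : R -> nat -> R) (I : R) : Prop :=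
  LS_int0 K (fun t k => beta k + (T - t) * b k) P T I.

Definition MCLPd_optimal (K J : nat) (A : nat -> nat -> R) (beta b gamma c : nat -> R)
  (T : R) (P : R -> nat -> R) : Prop :=
  MCLPd_feasible K J A gamma c T P /\
  exists I, MCLPd_value K beta b T P I /\
    forall P' I', MCLPd_feasible K J A gamma c T P' -> MCLPd_value K beta b T P' I' -> I <= I'.

Definition nondegenerate_I (K J : nat) (A : nat -> nat -> R) (b c : nat -> R) : Prop :=
  (* b is not a linear combination of fewer than K columns of [A I] *)
  (forall (Su Sx : nat -> bool), (cnt J Su + cnt K Sx < K)%nat ->
     forall (u xd : nat -> R),
       (forall j, (j < J)%nat -> Su j = false -> u j = 0) ->
       (forall k, (k < K)%nat -> Sx k = false -> xd k = 0) ->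
       ~ (forall k, (k < K)%nat -> rsum J (fun j => A k j * u j) + xd k = b k)) /\
  (* c is not a linear combination of fewer than J columns of [A^T I] *)
  (forall (Sp Sq : nat -> bool), (cnt K Sp + cnt J Sq < J)%nat ->
     forall (p qd : nat -> R),
       (forall k, (k < K)%nat -> Sp k = false -> p k = 0) ->
       (forall j, (j < J)%nat -> Sq j = false -> qd j = 0) ->
       ~ (forall j, (j < J)%nat -> rsum K (fun k => A k j * p k) + qd j = c j)).

(* Bases of the Rates-LP.  A basis is given by index sets Ks (the k with
   xdot_k basic) and Js (the j with u_j NON-basic), as boolean predicates
   (only indices < K, resp. < J, matter).                             *)

Definition is_basis (K J : nat) (A : nat -> nat -> R) (Ks Js : nat -> bool) : Prop :=
  (cnt K Ks + (J - cnt J Js) = K)%nat /\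
  (* the basic columns of [A I] are linearly independent *)
  (forall u xd : nat -> R,
     (forall j, (j < J)%nat -> Js j = true -> u j = 0) ->
     (forall k, (k < K)%nat -> Ks k = false -> xd k = 0) ->
     (forall k, (k < K)%nat -> rsum J (fun j => A k j * u j) + xd k = 0) ->
     (forall j, (j < J)%nat -> u j = 0) /\ (forall k, (k < K)%nat -> xd k = 0)).

Definition primal_basic_sol (K J : nat) (A : nat -> nat -> R) (b : nat -> R)
  (Ks Js : nat -> bool) (u xd : nat -> R) : Prop :=
  (forall k, (k < K)%nat -> rsum J (fun j => A k j * u j) + xd k = b k) /\
  (forall j, (j < J)%nat -> Js j = true -> u j = 0) /\
  (forall k, (k < K)%nat -> Ks k = false -> xd k = 0).

Definition dual_basic_sol (K J : nat) (A : nat -> nat -> R) (c : nat -> R)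
  (Ks Js : nat -> bool) (p qd : nat -> R) : Prop :=
  (forall j, (j < J)%nat -> rsum K (fun k => A k j * p k) - qd j = c j) /\
  (forall k, (k < K)%nat -> Ks k = true -> p k = 0) /\
  (forall j, (j < J)%nat -> Js j = false -> qd j = 0).

Definition admissible (K J : nat) (u p : nat -> R) : Prop :=
  (forall j, (j < J)%nat -> 0 <= u j) /\ (forall k, (k < K)%nat -> 0 <= p k).

(* primal variables: xdot_k or u_j *)
Inductive pvar : Type := VX (k : nat) | VU (j : nat).

Definition is_basic (K J : nat) (Ks Js : nat -> bool) (v : pvar) : Prop :=
  match v with
  | VX k => (k < K)%nat /\ Ks k = true
  | VU j => (j < J)%nat /\ Js j = false
  end.

Definition in_range (K J : nat) (v : pvar) : Prop :=
  match v with VX k => (k < K)%nat | VU j => (j < J)%nat end.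

Definition pivot (K J : nat) (Ks1 Js1 Ks2 Js2 : nat -> bool) (v : pvar) : Prop :=
  is_basic K J Ks1 Js1 v /\ ~ is_basic K J Ks2 Js2 v /\
  exists w, in_range K J w /\ ~ is_basic K J Ks1 Js1 w /\ is_basic K J Ks2 Js2 w /\
    forall y, in_range K J y -> y <> v -> y <> w ->
      (is_basic K J Ks1 Js1 y <-> is_basic K J Ks2 Js2 y).

(* Base sequence B_1..B_N (indices n = 1..N of the families Ks, Js, u, xd,
   p, qd), with leaving variables v n (n = 1..N-1), and boundary index
   sets K0, J0, KN1 (= K_{N+1}), JN1 (= J_{N+1}). *)
Definition base_sequence (K J : nat) (A : nat -> nat -> R) (b c : nat -> R) (N : nat)
  (Ks Js : nat -> nat -> bool) (u xd p qd : nat -> nat -> R) (v : nat -> pvar)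
  (K0 J0 KN1 JN1 : nat -> bool) : Prop :=
  (1 <= N)%nat /\
  (forall n, (1 <= n <= N)%nat ->
     is_basis K J A (Ks n) (Js n) /\
     primal_basic_sol K J A b (Ks n) (Js n) (u n) (xd n) /\
     dual_basic_sol K J A c (Ks n) (Js n) (p n) (qd n) /\
     admissible K J (u n) (p n)) /\
  (forall n, (1 <= n <= N - 1)%nat ->
     pivot K J (Ks n) (Js n) (Ks (S n)) (Js (S n)) (v n)) /\
  (forall k, (k < K)%nat -> K0 k = true -> Ks 1%nat k = true) /\
  (forall j, (j < J)%nat -> JN1 j = true -> Js N j = true).

Definition xstate (x0 : nat -> R) (xd : nat -> nat -> R) (tau : nat -> R) (n k : nat) : R :=
  x0 k + rsum n (fun i => xd (S i) k * tau (S i)).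

Definition qstate (N : nat) (qN : nat -> R) (qd : nat -> nat -> R) (tau : nat -> R) (n j : nat) : R :=
  qN j + rsum (N - n) (fun i => qd (S n + i)%nat j * tau (S n + i)%nat).

Definition bs_system (K J : nat) (A : nat -> nat -> R) (beta gamma : nat -> R) (T : R)
  (N : nat) (xd qd : nat -> nat -> R) (v : nat -> pvar) (K0 J0 KN1 JN1 : nat -> bool)
  (U0 UN x0 XN P0 PN qN Q0 tau : nat -> R) : Prop :=
  (forall n, (1 <= n <= N - 1)%nat ->
     (forall k, v n = VX k -> xstate x0 xd tau n k = 0) /\
     (forall j, v n = VU j -> qstate N qN qd tau n j = 0)) /\
  rsum N (fun i => tau (S i)) = T /\
  (forall j, (j < J)%nat -> J0 j = true -> U0 j = 0) /\
  (forall k, (k < K)%nat -> K0 k = false -> x0 k = 0) /\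
  (forall k, (k < K)%nat -> K0 k = true -> P0 k = 0) /\
  (forall j, (j < J)%nat -> J0 j = false -> Q0 j = 0) /\
  (forall k, (k < K)%nat -> KN1 k = true -> PN k = 0) /\
  (forall j, (j < J)%nat -> JN1 j = false -> qN j = 0) /\
  (forall j, (j < J)%nat -> JN1 j = true -> UN j = 0) /\
  (forall k, (k < K)%nat -> KN1 k = false -> XN k = 0) /\
  (forall k, (k < K)%nat -> rsum J (fun j => A k j * U0 j) + x0 k = beta k) /\
  (forall j, (j < J)%nat -> rsum K (fun k => A k j * PN k) - qN j = gamma j) /\
  (forall k, (k < K)%nat -> rsum J (fun j => A k j * UN j) + XN k - xstate x0 xd tau N k = 0) /\
  (forall j, (j < J)%nat -> rsum K (fun k => A k j * P0 k) - Q0 j + qstate N qN qd tau 0 j = 0).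

Definition tpt (tau : nat -> R) (n : nat) : R := rsum n (fun i => tau (S i)).

(* length of the interval (a,b) /\ (0,s)  (= int_0^s of the indicator of (a,b)) *)
Definition overlap (a b s : R) : R := Rmax 0 (Rmin b s - Rmax a 0).

(* U(t) = U0 + int_0^t u(s) ds for t < T, plus the final jump UN at T,
   where u = u^n on (t_{n-1}, t_n). *)
Definition Ucons (T : R) (N : nat) (u : nat -> nat -> R) (tau U0 UN : nat -> R)
  (t : R) (j : nat) : R :=
  U0 j + rsum N (fun i => u (S i) j * overlap (tpt tau i) (tpt tau (S i)) t)
  + (if Rlt_dec t T then 0 else UN j).

(* P(s) = PN + int_0^s p(r) dr for s < T, plus P0 at T,
   where p = p^n on (T - t_n, T - t_{n-1}). *)
Definition Pcons (T : R) (N : nat) (p : nat -> nat -> R) (tau PN P0 : nat -> R)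
  (s : R) (k : nat) : R :=
  PN k + rsum N (fun i => p (S i) k * overlap (T - tpt tau (S i)) (T - tpt tau i) s)
  + (if Rlt_dec s T then 0 else P0 k).

(* Main.v *)
Require Import Defs.
From Stdlib Require Import Reals Lra Lia Classical.
Open Scope R_scope.


Lemma rsum_ext n f g : (forall i, (i < n)%nat -> f i = g i) -> rsum n f = rsum n g.
Proof.
  induction n; intros H; simpl; auto.
  rewrite IHn by (intros; apply H; lia). rewrite H by lia. reflexivity.
Qed.

Lemma rsum_plus n f g : rsum n (fun i => f i + g i) = rsum n f + rsum n g.
Proof. induction n; simpl; [lra|]. rewrite IHn; lra. Qed.

Lemma rsum_minus n f g : rsum n (fun i => f i - g i) = rsum n f - rsum n g.
Proof. induction n; simpl; [lra|]. rewrite IHn; lra. Qed.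

Lemma rsum_scal n a f : rsum n (fun i => a * f i) = a * rsum n f.
Proof. induction n; simpl; [lra|]. rewrite IHn; lra. Qed.

Lemma rsum_zero n f : (forall i, (i < n)%nat -> f i = 0) -> rsum n f = 0.
Proof.
  intros H. rewrite (rsum_ext n f (fun _ => 0)) by auto.
  clear H. induction n; simpl; lra.
Qed.

Lemma rsum_swap a b (F : nat -> nat -> R) :
  rsum a (fun i => rsum b (fun j => F i j)) = rsum b (fun j => rsum a (fun i => F i j)).
Proof.
  induction a; simpl.
  - symmetry; apply rsum_zero; auto.
  - rewrite IHa. rewrite <- rsum_plus. reflexivity.
Qed.

Lemma rsum_shift m F : rsum (S m) F = F 0%nat + rsum m (fun i => F (S i)).
Proof. induction m; simpl in *; [lra|]. rewrite IHm; lra. Qed.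

Lemma rsum_add a b F : rsum (a + b) F = rsum a F + rsum b (fun i => F (a + i)%nat).
Proof.
  induction b; simpl.
  - rewrite Nat.add_0_r; lra.
  - rewrite Nat.add_succ_r; simpl. rewrite IHb; lra.
Qed.

Lemma rsum_rev m F : rsum m (fun l => F (m - S l)%nat) = rsum m F.
Proof.
  induction m.
  - reflexivity.
  - rewrite rsum_shift. simpl (S m - S 0)%nat. rewrite Nat.sub_0_r.
    rewrite (rsum_ext m (fun i => F (S m - S (S i))%nat) (fun l => F (m - S l)%nat))
      by (intros; f_equal; lia).
    rewrite IHm. simpl. lra.
Qed.

Lemma rsum_nonneg n f : (forall i, (i < n)%nat -> 0 <= f i) -> 0 <= rsum n f.
Proof. induction n; simpl; intros; [lra|]. assert (0 <= f n) by (apply H; lia).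
  assert (0 <= rsum n f) by (apply IHn; intros; apply H; lia). lra. Qed.

Lemma rsum_le n f g : (forall i, (i < n)%nat -> f i <= g i) -> rsum n f <= rsum n g.
Proof. induction n; simpl; intros; [lra|]. assert (f n <= g n) by (apply H; lia).
  assert (rsum n f <= rsum n g) by (apply IHn; intros; apply H; lia). lra. Qed.

Lemma rsum_abs n f : Rabs (rsum n f) <= rsum n (fun i => Rabs (f i)).
Proof. induction n; simpl. rewrite Rabs_R0; lra.
  eapply Rle_trans; [apply Rabs_triang|]. lra. Qed.

Lemma rsum_tele m (H : nat -> R) : rsum m (fun i => H (S i) - H i) = H m - H 0%nat.
Proof. induction m; simpl; [lra|]. rewrite IHm; lra. Qed.


Ltac unf := unfold overlap, Rmax, Rmin in *; repeat match goal with
  | |- context [Rle_dec ?x ?y] => destruct (Rle_dec x y)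
  | H : context [Rle_dec ?x ?y] |- _ => destruct (Rle_dec x y) end.

Lemma ov_nonneg a b s : 0 <= overlap a b s.
Proof. unf; lra. Qed.

Lemma ov_mono a b s s' : s <= s' -> overlap a b s <= overlap a b s'.
Proof. intros; unf; lra. Qed.

Lemma ov_lip a b s s' : Rabs (overlap a b s' - overlap a b s) <= Rabs (s' - s).
Proof. unfold Rabs; repeat destruct Rcase_abs; unf; lra. Qed.

Lemma ov_clamp a b s : 0 <= a <= b -> overlap a b s = Rmax a (Rmin b s) - a.
Proof. intros; unf; lra. Qed.

Lemma ov_right a b s : 0 <= a <= b -> b <= s -> overlap a b s = b - a.
Proof. intros; unf; lra. Qed.

Lemma ov_mid a b s : 0 <= a -> a <= s <= b -> overlap a b s = s - a.
Proof. intros; unf; lra. Qed.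

Lemma ov_left a b s : 0 <= a -> s <= a -> overlap a b s = 0.
Proof. intros; unf; lra. Qed.

Definition PL (T : R) (N : nat) (g : nat -> nat -> R) (a b F0 F1 : nat -> R) (t : R) (j : nat) : R :=
  F0 j + rsum N (fun i => g (S i) j * overlap (a i) (b i) t) + (if Rlt_dec t T then 0 else F1 j).

Lemma PL_nonneg n T N g a b F0 F1 :
  (forall i j, (1 <= i <= N)%nat -> (j < n)%nat -> 0 <= g i j) ->
  (forall j, (j < n)%nat -> 0 <= F0 j /\ 0 <= F1 j) ->
  nonneg_on n T (PL T N g a b F0 F1).
Proof.
  intros Hg HF t j Ht Hj. unfold PL.
  assert (0 <= rsum N (fun i => g (S i) j * overlap (a i) (b i) t)).
  { apply rsum_nonneg; intros. apply Rmult_le_pos; [apply Hg; lia| apply ov_nonneg]. }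
  destruct (HF j Hj). destruct (Rlt_dec t T); lra.
Qed.

Lemma PL_nondecr n T N g a b F0 F1 :
  (forall i j, (1 <= i <= N)%nat -> (j < n)%nat -> 0 <= g i j) ->
  (forall j, (j < n)%nat -> 0 <= F0 j /\ 0 <= F1 j) ->
  nondecr_on n T (PL T N g a b F0 F1).
Proof.
  intros Hg HF t1 t2 j H1 H12 H2 Hj. unfold PL.
  assert (rsum N (fun i => g (S i) j * overlap (a i) (b i) t1) <=
          rsum N (fun i => g (S i) j * overlap (a i) (b i) t2)).
  { apply rsum_le; intros. apply Rmult_le_compat_l; [apply Hg; lia| apply ov_mono; lra]. }
  destruct (HF j Hj). destruct (Rlt_dec t1 T); destruct (Rlt_dec t2 T); lra.
Qed.

Lemma PL_rcont n T N g a b F0 F1 : rcont_on n T (PL T N g a b F0 F1).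
Proof.
  intros t j Ht Hj eps Heps.
  set (S0 := rsum N (fun i => Rabs (g (S i) j))).
  assert (HS0 : 0 <= S0) by (apply rsum_nonneg; intros; apply Rabs_pos).
  exists (Rmin (T - t) (eps / (S0 + 1))). split.
  { apply Rmin_glb_lt; [lra| apply Rdiv_lt_0_compat; lra]. }
  intros t' Ht' HtT.
  assert (Hm1 : Rmin (T - t) (eps / (S0 + 1)) <= T - t) by apply Rmin_l.
  assert (Hm2 : Rmin (T - t) (eps / (S0 + 1)) <= eps / (S0 + 1)) by apply Rmin_r.
  unfold PL. destruct (Rlt_dec t' T); [|lra]. destruct (Rlt_dec t T); [|lra].
  replace (F0 j + rsum N (fun i => g (S i) j * overlap (a i) (b i) t') + 0 -
     (F0 j + rsum N (fun i => g (S i) j * overlap (a i) (b i) t) + 0))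
    with (rsum N (fun i => g (S i) j * (overlap (a i) (b i) t' - overlap (a i) (b i) t)))
    by (rewrite (rsum_ext N _ _ (fun i _ => Rmult_minus_distr_l _ _ _)); rewrite rsum_minus; ring).
  eapply Rle_lt_trans; [apply rsum_abs|].
  apply Rle_lt_trans with (rsum N (fun i => Rabs (g (S i) j) * (t' - t))).
  { apply rsum_le; intros. rewrite Rabs_mult. apply Rmult_le_compat_l; [apply Rabs_pos|].
    eapply Rle_trans; [apply ov_lip|]. rewrite Rabs_right; lra. }
  rewrite (rsum_ext N _ (fun i => (t' - t) * Rabs (g (S i) j))) by (intros; ring).
  rewrite rsum_scal. fold S0.
  assert ((t' - t) * S0 <= eps / (S0 + 1) * S0).
  { apply Rmult_le_compat_r; lra. }
  assert (eps / (S0 + 1) * S0 < eps).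
  { unfold Rdiv. replace (eps * / (S0 + 1) * S0) with (eps * (S0 / (S0 + 1))) by (field; lra).
    assert (S0 / (S0 + 1) < 1).
    { apply (Rmult_lt_reg_r (S0 + 1)); [lra|]. unfold Rdiv. rewrite Rmult_assoc, Rinv_l by lra. lra. }
    assert (0 <= S0 / (S0 + 1)) by (unfold Rdiv; apply Rmult_le_pos; [lra| left; apply Rinv_0_lt_compat; lra]). nra. }
  lra.
Qed.


Lemma part_mono a b m s xi d : tagged_partition a b m s xi d ->
  forall i j, (i <= j <= m)%nat -> s i <= s j.
Proof.
  intros [H0 [Hm H]] i j Hij. destruct Hij as [Hij Hjm].
  induction j.
  - assert (i = 0%nat) by lia. subst; lra.
  - destruct (Nat.eq_dec i (S j)). subst; lra.
    assert (s i <= s j) by (apply IHj; lia).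
    destruct (H j ltac:(lia)) as [[? ?] _]. lra.
Qed.

Lemma part_range T m s xi d : tagged_partition 0 T m s xi d ->
  forall i, (i <= m)%nat -> 0 <= s i <= T.
Proof.
  intros Hp i Hi. pose proof (part_mono _ _ _ _ _ _ Hp) as M.
  destruct Hp as [H0 [Hm _]].
  split; [rewrite <- H0; apply M; lia| rewrite <- Hm; apply M; lia].
Qed.

Definition RS1 (f F : R -> R) (T I : R) : Prop :=
  forall eps, eps > 0 -> exists delta, delta > 0 /\
    forall m s xi, tagged_partition 0 T m s xi delta ->
      Rabs (rsum m (fun i => f (xi i) * (F (s (S i)) - F (s i))) - I) < eps.

Lemma tp_mono_delta a b m s xi d d' : d <= d' -> tagged_partition a b m s xi d -> tagged_partition a b m s xi d'.
Proof. intros Hd [H0 [H1 H]]. split; [|split]; auto. intros i Hi; destruct (H i Hi) as [? ?]; split; auto; lra. Qed.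

Lemma RS1_add f F1 F2 T I1 I2 : RS1 f F1 T I1 -> RS1 f F2 T I2 -> RS1 f (fun t => F1 t + F2 t) T (I1 + I2).
Proof.
  intros H1 H2 eps Heps.
  destruct (H1 (eps/2) ltac:(lra)) as [d1 [Hd1 R1]].
  destruct (H2 (eps/2) ltac:(lra)) as [d2 [Hd2 R2]].
  exists (Rmin d1 d2). split. apply Rmin_glb_lt; auto.
  intros m s xi Hp.
  specialize (R1 m s xi (tp_mono_delta _ _ _ _ _ _ _ (Rmin_l d1 d2) Hp)).
  specialize (R2 m s xi (tp_mono_delta _ _ _ _ _ _ _ (Rmin_r d1 d2) Hp)).
  rewrite (rsum_ext m _ (fun i => f (xi i) * (F1 (s (S i)) - F1 (s i)) + f (xi i) * (F2 (s (S i)) - F2 (s i)))) by (intros; ring).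
  rewrite rsum_plus.
  replace (rsum m (fun i => f (xi i) * (F1 (s (S i)) - F1 (s i))) +
    rsum m (fun i => f (xi i) * (F2 (s (S i)) - F2 (s i))) - (I1 + I2)) with
    ((rsum m (fun i => f (xi i) * (F1 (s (S i)) - F1 (s i))) - I1) +
    (rsum m (fun i => f (xi i) * (F2 (s (S i)) - F2 (s i))) - I2)) by ring.
  eapply Rle_lt_trans; [apply Rabs_triang|]. lra.
Qed.

Lemma RS1_const f F0 T : RS1 f (fun _ => F0) T 0.
Proof.
  intros eps Heps. exists 1. split; [lra|]. intros.
  rewrite rsum_zero by (intros; ring). rewrite Rminus_0_r, Rabs_R0; lra.
Qed.

Lemma RS1_scal f F T I a : RS1 f F T I -> RS1 f (fun t => a * F t) T (a * I).
Proof.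
  intros H eps Heps.
  destruct (H (eps / (Rabs a + 1))) as [d [Hd R]].
  { apply Rdiv_lt_0_compat; [lra|]. pose proof (Rabs_pos a); lra. }
  exists d; split; auto. intros m s xi Hp. specialize (R m s xi Hp).
  rewrite (rsum_ext m _ (fun i => a * (f (xi i) * (F (s (S i)) - F (s i))))) by (intros; ring).
  rewrite rsum_scal, <- Rmult_minus_distr_l, Rabs_mult.
  pose proof (Rabs_pos a).
  apply Rle_lt_trans with (Rabs a * (eps / (Rabs a + 1))).
  { apply Rmult_le_compat_l; lra. }
  replace (Rabs a * (eps / (Rabs a + 1))) with (eps * (Rabs a / (Rabs a + 1))) by (field; lra).
  assert (Rabs a / (Rabs a + 1) < 1).
  { apply (Rmult_lt_reg_r (Rabs a + 1)); [lra|]. unfold Rdiv. rewrite Rmult_assoc, Rinv_l by lra. lra. }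
  nra.
Qed.

Lemma RS1_rsum f T N (G : nat -> R -> R) (I : nat -> R) :
  (forall i, (i < N)%nat -> RS1 f (G i) T (I i)) ->
  RS1 f (fun t => rsum N (fun i => G i t)) T (rsum N I).
Proof.
  induction N; intros H.
  - simpl. apply RS1_const.
  - simpl. apply RS1_add; [apply IHN; intros; apply H; lia| apply H; lia].
Qed.

Lemma RS1_ext f F F' T I : RS1 f F T I -> (forall t, 0 <= t <= T -> F t = F' t) -> RS1 f F' T I.
Proof.
  intros H E eps Heps. destruct (H eps Heps) as [d [Hd R]]. exists d; split; auto.
  intros m s xi Hp. rewrite (rsum_ext m _ (fun i => f (xi i) * (F (s (S i)) - F (s i)))).
  apply R; auto.
  intros i Hi. rewrite !E; auto; apply (part_range T m s xi d Hp); lia.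
Qed.

Lemma approx_sum m (s : nat -> R) (term : nat -> R) (H W : R -> R) (Kc : R) :
  (forall i, (i < m)%nat -> Rabs (term i - (H (s (S i)) - H (s i))) <= Kc * (W (s (S i)) - W (s i))) ->
  Rabs (rsum m term - (H (s m) - H (s 0%nat))) <= Kc * (W (s m) - W (s 0%nat)).
Proof.
  intros Hb. rewrite <- (rsum_tele m (fun i => H (s i))), <- (rsum_tele m (fun i => W (s i))).
  rewrite <- rsum_minus. eapply Rle_trans; [apply rsum_abs|].
  rewrite <- rsum_scal. apply rsum_le; intros; auto.
Qed.

Definition clamp (a b t : R) := Rmax a (Rmin b t).

Lemma ov_clamp2 a b s : 0 <= a <= b -> overlap a b s = clamp a b s - a.
Proof. apply ov_clamp. Qed.

Lemma clamp_prop a b s s' : 0 <= a <= b -> s <= s' ->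
  clamp a b s <= clamp a b s' /\ (clamp a b s = clamp a b s' \/ (s <= clamp a b s /\ clamp a b s' <= s')).
Proof. intros; unfold clamp, Rmax, Rmin;
  repeat match goal with |- context [Rle_dec ?x ?y] => destruct (Rle_dec x y)
  | H : context [Rle_dec ?x ?y] |- _ => destruct (Rle_dec x y) end; lra. Qed.

Lemma RS1_ovl f al be T a b : (forall t, f t = al + be * t) -> 0 <= a -> a <= b -> b <= T ->
  RS1 f (overlap a b) T ((al * b + be * b * b / 2) - (al * a + be * a * a / 2)).
Proof.
  intros Hf Ha Hab HbT eps Heps.
  set (G := fun y => al * y + be * y * y / 2).
  pose proof (Rabs_pos be) as Hbe.
  assert (Hpos : 0 < Rabs be * (b - a) + 1) by nra.
  exists (eps / (Rabs be * (b - a) + 1)). split. apply Rdiv_lt_0_compat; lra.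
  intros m s xi Hp. pose proof (part_range _ _ _ _ _ Hp) as Rg.
  pose proof Hp as [H0 [Hm Hpt]].
  set (d := eps / (Rabs be * (b - a) + 1)) in *.
  assert (Hd : 0 < d) by (apply Rdiv_lt_0_compat; lra).
  assert (A : Rabs (rsum m (fun i => f (xi i) * (overlap a b (s (S i)) - overlap a b (s i))) -
     (G (clamp a b (s m)) - G (clamp a b (s 0%nat)))) <= Rabs be * d * (clamp a b (s m) - clamp a b (s 0%nat))).
  { apply (approx_sum m s _ (fun t => G (clamp a b t)) (clamp a b)).
    intros i Hi. destruct (Hpt i Hi) as [[Hx1 Hx2] Hdl].
    assert (R1 := Rg i ltac:(lia)). assert (R2 := Rg (S i) ltac:(lia)).
    rewrite !(ov_clamp2 a b) by lra. rewrite Hf.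
    destruct (clamp_prop a b (s i) (s (S i)) ltac:(lra) ltac:(lra)) as [Hle [Heq | [Hy1 Hy2]]].
    - rewrite Heq. unfold G. replace ((al + be * xi i) * (clamp a b (s (S i)) - a - (clamp a b (s (S i)) - a)) -
        (al * clamp a b (s (S i)) + be * clamp a b (s (S i)) * clamp a b (s (S i)) / 2 -
         (al * clamp a b (s (S i)) + be * clamp a b (s (S i)) * clamp a b (s (S i)) / 2))) with 0 by ring.
      rewrite Rabs_R0. lra.
    - set (y := clamp a b (s i)) in *. set (y' := clamp a b (s (S i))) in *. unfold G.
      replace ((al + be * xi i) * (y' - a - (y - a)) - (al * y' + be * y' * y' / 2 - (al * y + be * y * y / 2)))
        with ((y' - y) * (be * (xi i - (y + y') / 2))) by field.
      rewrite Rabs_mult, Rabs_mult, (Rabs_right (y' - y)) by lra.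
      assert (Rabs (xi i - (y + y') / 2) <= d).
      { apply Rabs_le. lra. }
      assert (Rabs be * Rabs (xi i - (y + y') / 2) <= Rabs be * d) by (apply Rmult_le_compat_l; lra).
      nra. }
  assert (C0 : clamp a b (s 0%nat) = a) by (rewrite H0; unfold clamp, Rmax, Rmin;
    repeat match goal with |- context [Rle_dec ?x ?y] => destruct (Rle_dec x y)
  | H : context [Rle_dec ?x ?y] |- _ => destruct (Rle_dec x y) end; lra).
  assert (Cm : clamp a b (s m) = b) by (rewrite Hm; unfold clamp, Rmax, Rmin;
    repeat match goal with |- context [Rle_dec ?x ?y] => destruct (Rle_dec x y)
  | H : context [Rle_dec ?x ?y] |- _ => destruct (Rle_dec x y) end; lra).
  rewrite C0, Cm in A. unfold G in A.
  eapply Rle_lt_trans; [exact A|].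
  replace (Rabs be * d * (b - a)) with (eps * (Rabs be * (b - a) / (Rabs be * (b - a) + 1))) by (unfold d; field; lra).
  assert (Rabs be * (b - a) / (Rabs be * (b - a) + 1) < 1).
  { apply (Rmult_lt_reg_r (Rabs be * (b - a) + 1)); [lra|]. unfold Rdiv. rewrite Rmult_assoc, Rinv_l by lra. lra. }
  nra.
Qed.

Definition jmp (T t : R) := if Rlt_dec t T then 0 else 1.

Lemma RS1_jump f al be T : (forall t, f t = al + be * t) -> T > 0 -> RS1 f (jmp T) T (f T).
Proof.
  intros Hf HT eps Heps.
  pose proof (Rabs_pos be) as Hbe.
  exists (eps / (Rabs be + 1)). split. apply Rdiv_lt_0_compat; lra.
  intros m s xi Hp. pose proof (part_range _ _ _ _ _ Hp) as Rg.
  pose proof Hp as [H0 [Hm Hpt]].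
  set (d := eps / (Rabs be + 1)) in *.
  assert (Hd : 0 < d) by (apply Rdiv_lt_0_compat; lra).
  assert (A : Rabs (rsum m (fun i => f (xi i) * (jmp T (s (S i)) - jmp T (s i))) -
     (f T * jmp T (s m) - f T * jmp T (s 0%nat))) <= Rabs be * d * (jmp T (s m) - jmp T (s 0%nat))).
  { apply (approx_sum m s _ (fun t => f T * jmp T t) (jmp T)).
    intros i Hi. destruct (Hpt i Hi) as [[Hx1 Hx2] Hdl].
    assert (R1 := Rg i ltac:(lia)). assert (R2 := Rg (S i) ltac:(lia)).
    rewrite !Hf. unfold jmp. destruct (Rlt_dec (s (S i)) T); destruct (Rlt_dec (s i) T); try lra.
    - replace ((al + be * xi i) * (0 - 0) - ((al + be * T) * 0 - (al + be * T) * 0)) with 0 by ring.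
      rewrite Rabs_R0; lra.
    - replace ((al + be * xi i) * (1 - 0) - ((al + be * T) * 1 - (al + be * T) * 0)) with (be * (xi i - T)) by ring.
      rewrite Rabs_mult. replace (Rabs be * d * (1 - 0)) with (Rabs be * d) by ring.
      apply Rmult_le_compat_l; [lra|]. apply Rabs_le; lra.
    - replace ((al + be * xi i) * (1 - 1) - ((al + be * T) * 1 - (al + be * T) * 1)) with 0 by ring.
      rewrite Rabs_R0; lra. }
  assert (J0 : jmp T (s 0%nat) = 0) by (rewrite H0; unfold jmp; destruct (Rlt_dec 0 T); lra).
  assert (Jm : jmp T (s m) = 1) by (rewrite Hm; unfold jmp; destruct (Rlt_dec T T); lra).
  rewrite J0, Jm in A. replace (f T * 1 - f T * 0) with (f T) in A by ring.
  eapply Rle_lt_trans; [exact A|].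
  replace (Rabs be * d * (1 - 0)) with (eps * (Rabs be / (Rabs be + 1))) by (unfold d; field; lra).
  assert (Rabs be / (Rabs be + 1) < 1).
  { apply (Rmult_lt_reg_r (Rabs be + 1)); [lra|]. unfold Rdiv. rewrite Rmult_assoc, Rinv_l by lra. lra. }
  nra.
Qed.

Lemma RS_int_of_RS1 n f F T I :
  (forall j, (j < n)%nat -> RS1 (fun t => f t j) (fun t => F t j) T (I j)) ->
  RS_int n f F 0 T (rsum n I).
Proof.
  induction n; intros H eps Heps.
  - exists 1; split; [lra|]. intros. unfold RS_sum. simpl. rewrite rsum_zero by auto.
    rewrite Rminus_0_r, Rabs_R0; lra.
  - destruct (IHn (fun j Hj => H j ltac:(lia)) (eps/2) ltac:(lra)) as [d1 [Hd1 R1]].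
    destruct (H n ltac:(lia) (eps/2) ltac:(lra)) as [d2 [Hd2 R2]].
    exists (Rmin d1 d2). split. apply Rmin_glb_lt; auto.
    intros m s xi Hp.
    specialize (R1 m s xi (tp_mono_delta _ _ _ _ _ _ _ (Rmin_l d1 d2) Hp)).
    specialize (R2 m s xi (tp_mono_delta _ _ _ _ _ _ _ (Rmin_r d1 d2) Hp)).
    unfold RS_sum in *. simpl. rewrite rsum_plus.
    replace (rsum m (fun i => rsum n (fun j => f (xi i) j * (F (s (S i)) j - F (s i) j))) +
      rsum m (fun i => f (xi i) n * (F (s (S i)) n - F (s i) n)) - (rsum n I + I n)) with
      ((rsum m (fun i => rsum n (fun j => f (xi i) j * (F (s (S i)) j - F (s i) j))) - rsum n I) +
      (rsum m (fun i => f (xi i) n * (F (s (S i)) n - F (s i) n)) - I n)) by ring.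
    eapply Rle_lt_trans; [apply Rabs_triang|]. lra.
Qed.


Lemma PL_LS n f (al be : nat -> R) T N g a b F0 F1 :
  (forall t j, f t j = al j + be j * t) -> T > 0 ->
  (forall i, (i < N)%nat -> 0 <= a i /\ a i <= b i /\ b i <= T) ->
  exists I, LS_int0 n f (PL T N g a b F0 F1) T I.
Proof.
  intros Hf HT Hab.
  set (Ij := fun j => rsum N (fun i => g (S i) j *
     ((al j * b i + be j * b i * b i / 2) - (al j * a i + be j * a i * a i / 2))) + F1 j * f T j).
  exists (rsum n (fun j => f 0 j * PL T N g a b F0 F1 0 j) + rsum n Ij).
  exists (rsum n Ij). split; [|reflexivity].
  apply RS_int_of_RS1. intros j Hj.
  eapply RS1_ext.
  2:{ intros t Ht. unfold PL. instantiate (1 := fun t => (F0 j + rsum N (fun i => g (S i) j * overlap (a i) (b i) t)) + F1 j * jmp T t).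
      simpl. unfold jmp. destruct (Rlt_dec t T); ring. }
  unfold Ij. apply RS1_add.
  - replace (rsum N (fun i => g (S i) j * (al j * b i + be j * b i * b i / 2 - (al j * a i + be j * a i * a i / 2))))
      with (0 + rsum N (fun i => g (S i) j * (al j * b i + be j * b i * b i / 2 - (al j * a i + be j * a i * a i / 2)))) by ring.
    apply RS1_add; [apply RS1_const|].
    apply RS1_rsum. intros i Hi. apply RS1_scal. destruct (Hab i Hi) as [? [? ?]].
    apply (RS1_ovl _ (al j) (be j)); auto.
  - change (f T j) with ((fun t => f t j) T). apply RS1_scal. apply (RS1_jump (fun t => f t j) (al j) (be j)); auto.
Qed.


Lemma abel m (a y : nat -> R) :
  a 0%nat * y 0%nat + rsum m (fun i => a (S i) * (y (S i) - y i)) =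
  rsum m (fun i => (a i - a (S i)) * y i) + a m * y m.
Proof. induction m; simpl; [ring|]. lra. Qed.

Lemma bilin K J (A : nat -> nat -> R) (P w : nat -> R) :
  rsum J (fun j => rsum K (fun k => A k j * P k) * w j) =
  rsum K (fun k => P k * rsum J (fun j => A k j * w j)).
Proof.
  rewrite (rsum_ext J _ (fun j => rsum K (fun k => A k j * P k * w j))).
  2:{ intros. rewrite Rmult_comm, <- rsum_scal. apply rsum_ext; intros; ring. }
  rewrite rsum_swap. apply rsum_ext; intros. rewrite <- rsum_scal. apply rsum_ext; intros; ring.
Qed.

Section Disc.
Variables (K J : nat) (A : nat -> nat -> R) (beta b gamma c : nat -> R) (T : R)
  (U P : R -> nat -> R).

Definition fU (t : R) (j : nat) := gamma j + (T - t) * c j.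
Definition gP (t : R) (k : nat) := beta k + (T - t) * b k.
Definition Qs (s : R) (j : nat) := rsum K (fun k => A k j * P (T - s) k) - fU s j.
Definition Xs (s : R) (k : nat) := gP (T - s) k - rsum J (fun j => A k j * U s j).

Definition Psum m s := rsum J (fun j => fU 0 j * U 0 j) + RS_sum J fU U m s (fun i => s (S i)).
Definition Dsum m s := rsum K (fun k => gP 0 k * P 0 k) +
  RS_sum K gP P m (fun l => T - s (m - l)%nat) (fun l => T - s (m - S l)%nat).
Definition Gap1 m s := rsum J (fun j => Qs 0 j * U 0 j) +
  rsum m (fun i => rsum J (fun j => Qs (s (S i)) j * (U (s (S i)) j - U (s i) j))).
Definition Gap2 m (s : nat -> R) := rsum K (fun k =>
  rsum m (fun i => (P (T - s i) k - P (T - s (S i)) k) * Xs (s i) k) + P (T - s m) k * Xs (s m) k).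

Lemma disc_identity m s : s 0%nat = 0 -> s m = T -> Psum m s = Dsum m s - Gap1 m s - Gap2 m s.
Proof.
  intros H0 Hm.
  assert (E1 : Psum m s + Gap1 m s =
    rsum K (fun k => P (T - s 0%nat) k * rsum J (fun j => A k j * U (s 0%nat) j)) +
    rsum K (fun k => rsum m (fun i => P (T - s (S i)) k *
        (rsum J (fun j => A k j * U (s (S i)) j) - rsum J (fun j => A k j * U (s i) j))))).
  { unfold Psum, Gap1, RS_sum.
    assert (S1 : rsum J (fun j => fU 0 j * U 0 j) + rsum J (fun j => Qs 0 j * U 0 j) =
      rsum J (fun j => (fU 0 j + Qs 0 j) * U 0 j)) by (rewrite <- rsum_plus; apply rsum_ext; intros; ring).
    assert (S2 : rsum m (fun i => rsum J (fun j => fU (s (S i)) j * (U (s (S i)) j - U (s i) j))) +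
       rsum m (fun i => rsum J (fun j => Qs (s (S i)) j * (U (s (S i)) j - U (s i) j))) =
       rsum m (fun i => rsum J (fun j => (fU (s (S i)) j + Qs (s (S i)) j) * (U (s (S i)) j - U (s i) j))))
      by (rewrite <- rsum_plus; apply rsum_ext; intros; rewrite <- rsum_plus; apply rsum_ext; intros; ring).
    match goal with |- ?L = _ => transitivity ((rsum J (fun j => fU 0 j * U 0 j) + rsum J (fun j => Qs 0 j * U 0 j)) +
      (rsum m (fun i => rsum J (fun j => fU (s (S i)) j * (U (s (S i)) j - U (s i) j))) +
       rsum m (fun i => rsum J (fun j => Qs (s (S i)) j * (U (s (S i)) j - U (s i) j))))) end.
    { ring. }
    rewrite S1, S2.
    rewrite H0. f_equal.
    - rewrite (rsum_ext J _ (fun j => rsum K (fun k => A k j * P (T - 0) k) * U 0 j))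
        by (intros; unfold Qs; ring).
      apply bilin.
    - rewrite (rsum_ext m _ (fun i => rsum K (fun k => P (T - s (S i)) k *
          (rsum J (fun j => A k j * U (s (S i)) j) - rsum J (fun j => A k j * U (s i) j))))).
      + apply rsum_swap.
      + intros i Hi. rewrite (rsum_ext J _ (fun j => rsum K (fun k => A k j * P (T - s (S i)) k) *
            (U (s (S i)) j - U (s i) j))) by (intros; unfold Qs; ring).
        rewrite bilin. apply rsum_ext; intros. rewrite <- rsum_minus. f_equal. apply rsum_ext; intros; ring. }
  rewrite <- rsum_plus in E1.
  set (a := fun k i => P (T - s i) k).
  set (Y := fun k i => rsum J (fun j => A k j * U (s i) j)).
  set (h := fun k i => gP (T - s i) k).
  assert (E2 : forall k, P (T - s 0%nat) k * rsum J (fun j => A k j * U (s 0%nat) j) +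
     rsum m (fun i => P (T - s (S i)) k *
        (rsum J (fun j => A k j * U (s (S i)) j) - rsum J (fun j => A k j * U (s i) j))) =
     (rsum m (fun i => (a k i - a k (S i)) * h k i) + a k m * h k m) -
     (rsum m (fun i => (P (T - s i) k - P (T - s (S i)) k) * Xs (s i) k) + P (T - s m) k * Xs (s m) k)).
  { intros k. pose proof (abel m (a k) (Y k)) as Ab. unfold a, Y in Ab. simpl in Ab. rewrite Ab.
    assert (E : rsum m (fun i => (a k i - a k (S i)) * h k i) -
       rsum m (fun i => (P (T - s i) k - P (T - s (S i)) k) * Xs (s i) k) =
       rsum m (fun i => (P (T - s i) k - P (T - s (S i)) k) * rsum J (fun j => A k j * U (s i) j)))
      by (rewrite <- rsum_minus; apply rsum_ext; intros; unfold a, h, Xs; ring).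
    assert (E' : Xs (s m) k = h k m - rsum J (fun j => A k j * U (s m) j)) by (unfold Xs, h; ring).
    rewrite E'. unfold a in *. lra. }
  rewrite (rsum_ext K _ _ (fun k _ => E2 k)) in E1. rewrite rsum_minus in E1.
  assert (E3 : Dsum m s = rsum K (fun k => rsum m (fun i => (a k i - a k (S i)) * h k i) + a k m * h k m)).
  { unfold Dsum, RS_sum. rewrite rsum_swap, <- rsum_plus. apply rsum_ext; intros k Hk.
    rewrite (rsum_ext m (fun i => gP (T - s (m - S i)%nat) k * (P (T - s (m - S i)%nat) k - P (T - s (m - i)%nat) k))
       (fun l => (fun i => (a k i - a k (S i)) * h k i) (m - S l)%nat)).
    - rewrite (rsum_rev m (fun i => (a k i - a k (S i)) * h k i)). unfold a, h. rewrite Hm. replace (T - T) with 0 by ring. ring.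
    - intros l Hl. unfold a, h. replace (m - l)%nat with (S (m - S l)) by lia. ring. }
  unfold Gap2. lra.
Qed.

End Disc.


Lemma rev_part T m s d : tagged_partition 0 T m s (fun i => s (S i)) d ->
  tagged_partition 0 T m (fun l => T - s (m - l)%nat) (fun l => T - s (m - S l)%nat) d.
Proof.
  intros [H0 [Hm H]]. split; [|split].
  - rewrite Nat.sub_0_r, Hm; ring.
  - rewrite Nat.sub_diag, H0; ring.
  - intros l Hl. replace (m - S l)%nat with (m - S l)%nat by reflexivity.
    replace (S l) with (S l) by reflexivity.
    destruct (H (m - S l)%nat ltac:(lia)) as [[? ?] ?].
    replace (m - l)%nat with (S (m - S l)) by lia. lra.
Qed.

Lemma uniform_part T d : T > 0 -> d > 0 -> exists m s, tagged_partition 0 T m s (fun i => s (S i)) d.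
Proof.
  intros HT Hd. destruct (archimed_cor1 (d / T)) as [m [Hm Hm0]].
  { apply Rdiv_lt_0_compat; lra. }
  assert (HmR : 0 < INR m) by (apply lt_0_INR; lia).
  exists m, (fun i => T * INR i / INR m). split; [|split].
  - simpl. unfold Rdiv; ring.
  - field. lra.
  - intros i Hi. rewrite S_INR.
    assert (T / INR m < d).
    { apply (Rmult_lt_reg_r (/ T)). apply Rinv_0_lt_compat; lra.
      replace (T / INR m * / T) with (/ INR m) by (field; lra). exact Hm. }
    assert (0 < T / INR m) by (apply Rdiv_lt_0_compat; lra).
    replace (T * (INR i + 1) / INR m) with (T * INR i / INR m + T / INR m) by (field; lra).
    lra.
Qed.

Lemma gap_nonneg K J A beta b gamma c T U P m s d :
  MCLP_feasible K J A beta b T U -> MCLPd_feasible K J A gamma c T P ->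
  tagged_partition 0 T m s (fun i => s (S i)) d ->
  0 <= Gap1 K J A gamma c T U P m s /\ 0 <= Gap2 K J A beta b T U P m s.
Proof.
  intros [Un [Ud [_ Uc]]] [Pn [Pd [_ Pc]]] Hp.
  pose proof (part_range _ _ _ _ _ Hp) as Rg. pose proof Hp as [H0 _].
  assert (0 <= T) by (destruct (Rg 0%nat ltac:(lia)); lra).
  assert (HQ : forall t j, 0 <= t <= T -> (j < J)%nat -> 0 <= Qs K A gamma c T P t j).
  { intros t j Ht Hj. unfold Qs, fU. specialize (Pc (T - t) j ltac:(lra) Hj). lra. }
  assert (HX : forall t k, 0 <= t <= T -> (k < K)%nat -> 0 <= Xs J A beta b T U t k).
  { intros t k Ht Hk. unfold Xs, gP. specialize (Uc t k Ht Hk). replace (T - (T - t)) with t by ring. lra. }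
  split.
  - unfold Gap1. apply Rplus_le_le_0_compat.
    + apply rsum_nonneg; intros j Hj. apply Rmult_le_pos; [apply HQ; auto; lra| apply Un; auto; lra].
    + apply rsum_nonneg; intros i Hi. apply rsum_nonneg; intros j Hj.
      assert (R1 := Rg i ltac:(lia)). assert (R2 := Rg (S i) ltac:(lia)).
      apply Rmult_le_pos; [apply HQ; auto|].
      assert (s i <= s (S i)) by (apply (part_mono _ _ _ _ _ _ Hp); lia).
      specialize (Ud (s i) (s (S i)) j ltac:(lra) ltac:(lra) ltac:(lra) Hj). lra.
  - unfold Gap2. apply rsum_nonneg; intros k Hk. apply Rplus_le_le_0_compat.
    + apply rsum_nonneg; intros i Hi.
      assert (R1 := Rg i ltac:(lia)). assert (R2 := Rg (S i) ltac:(lia)).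
      apply Rmult_le_pos; [|apply HX; auto].
      assert (s i <= s (S i)) by (apply (part_mono _ _ _ _ _ _ Hp); lia).
      specialize (Pd (T - s (S i)) (T - s i) k ltac:(lra) ltac:(lra) ltac:(lra) Hk). lra.
    + assert (R1 := Rg m ltac:(lia)). apply Rmult_le_pos; [apply Pn; auto; lra| apply HX; auto].
Qed.

Lemma weak_duality K J A beta b gamma c T U P I1 I2 : T > 0 ->
  MCLP_feasible K J A beta b T U -> MCLPd_feasible K J A gamma c T P ->
  MCLP_value J gamma c T U I1 -> MCLPd_value K beta b T P I2 -> I1 <= I2.
Proof.
  intros HT HU HP [I01 [R1 E1]] [I02 [R2 E2]].
  destruct (Rle_lt_dec I1 I2) as [|Hlt]; auto. exfalso.
  set (eps := (I1 - I2) / 3).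
  assert (He : eps > 0) by (unfold eps; lra).
  destruct (R1 eps He) as [d1 [Hd1 S1]]. destruct (R2 eps He) as [d2 [Hd2 S2]].
  destruct (uniform_part T (Rmin d1 d2) HT) as [m [s Hp]]. { apply Rmin_glb_lt; auto. }
  specialize (S1 m s (fun i => s (S i)) (tp_mono_delta _ _ _ _ _ _ _ (Rmin_l d1 d2) Hp)).
  specialize (S2 m _ _ (rev_part _ _ _ _ (tp_mono_delta _ _ _ _ _ _ _ (Rmin_r d1 d2) Hp))).
  destruct (gap_nonneg K J A beta b gamma c T U P m s _ HU HP Hp) as [G1 G2].
  pose proof Hp as [H0 [Hm _]].
  pose proof (disc_identity K J A beta b gamma c T U P m s H0 Hm) as ID.
  unfold Psum, Dsum, fU, gP in ID.
  apply Rabs_def2 in S1. apply Rabs_def2 in S2.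
  unfold eps in *. lra.
Qed.


Section Spec.
Variables (K J : nat) (A : nat -> nat -> R) (beta b gamma c : nat -> R) (T : R)
  (N : nat) (Ks Js : nat -> nat -> bool) (u xd p qd : nat -> nat -> R)
  (v : nat -> pvar) (K0 J0 KN1 JN1 : nat -> bool)
  (U0 UN x0 XN P0 PN qN Q0 tau : nat -> R).
Hypothesis HT : T > 0.
Hypothesis HN : (1 <= N)%nat.
Hypothesis Htau : forall n, (1 <= n <= N)%nat -> 0 <= tau n.
Hypothesis HtN : rsum N (fun i => tau (S i)) = T.

Lemma tpt_S n : tpt tau (S n) = tpt tau n + tau (S n).
Proof. reflexivity. Qed.

Lemma tpt_mono i j : (i <= j <= N)%nat -> tpt tau i <= tpt tau j.
Proof.
  intros [Hij HjN]. induction j.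
  - assert (i = 0%nat) by lia. subst; lra.
  - destruct (Nat.eq_dec i (S j)). subst; lra.
    rewrite tpt_S. assert (tpt tau i <= tpt tau j) by (apply IHj; lia).
    assert (0 <= tau (S j)) by (apply Htau; lia). lra.
Qed.

Lemma tpt_NT : tpt tau N = T.
Proof. exact HtN. Qed.

Lemma tpt_range i : (i <= N)%nat -> 0 <= tpt tau i <= T.
Proof.
  intros Hi. split.
  - replace 0 with (tpt tau 0) by reflexivity. apply tpt_mono; lia.
  - rewrite <- tpt_NT. apply tpt_mono; lia.
Qed.

Lemma tpt_tail n : (n <= N)%nat -> tpt tau n + rsum (N - n) (fun i => tau (S n + i)%nat) = T.
Proof.
  intros Hn. rewrite <- tpt_NT. unfold tpt.
  replace (rsum N (fun i => tau (S i))) with (rsum (n + (N - n)) (fun i => tau (S i))) by (f_equal; lia).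
  rewrite rsum_add. reflexivity.
Qed.

Lemma find_interval t : 0 <= t <= T -> exists n, (1 <= n <= N)%nat /\ tpt tau (n - 1) <= t <= tpt tau n.
Proof.
  intros Ht.
  assert (G : forall M, (1 <= M <= N)%nat -> t <= tpt tau M ->
     exists n, (1 <= n <= M)%nat /\ tpt tau (n - 1) <= t <= tpt tau n).
  { induction M; intros HM Hle; [lia|].
    destruct (Nat.eq_dec M 0).
    - subst. exists 1%nat. simpl (1 - 1)%nat. split; [lia|]. unfold tpt at 1; simpl; lra.
    - destruct (Rle_dec t (tpt tau M)).
      + destruct (IHM ltac:(lia) r) as [n1 [Hn1 Hn2]]. exists n1; split; auto; lia.
      + exists (S M). simpl (S M - 1)%nat. rewrite Nat.sub_0_r. split; [lia|]. split; [|auto]. apply Rnot_le_lt in n0. lra. }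
  destruct (G N ltac:(lia)) as [n [Hn1 Hn2]]. rewrite tpt_NT; lra.
  exists n; split; auto.
Qed.

Lemma EvU n t j : (1 <= n <= N)%nat -> tpt tau (n - 1) <= t <= tpt tau n ->
  Ucons T N u tau U0 UN t j = U0 j + rsum (n - 1) (fun i => u (S i) j * tau (S i)) +
    u n j * (t - tpt tau (n - 1)) + (if Rlt_dec t T then 0 else UN j).
Proof.
  intros Hn Ht. unfold Ucons.
  replace N with ((n - 1) + S (N - n))%nat at 1 by lia.
  rewrite rsum_add, rsum_shift.
  rewrite (rsum_ext (n - 1) _ (fun i => u (S i) j * tau (S i))).
  2:{ intros i Hi. rewrite ov_right. rewrite tpt_S; ring.
      split; [apply tpt_range; lia|]. apply tpt_mono; lia.
      eapply Rle_trans; [|apply Ht]. apply tpt_mono; lia. }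
  rewrite (rsum_zero (N - n)).
  2:{ intros i Hi. rewrite ov_left. ring. apply tpt_range; lia.
      eapply Rle_trans; [apply Ht|]. apply tpt_mono; lia. }
  replace (n - 1 + 0)%nat with (n - 1)%nat by lia.
  replace (S (n - 1)) with n by lia.
  rewrite ov_mid. ring. apply tpt_range; lia. lra.
Qed.

Lemma EvP n t k : (1 <= n <= N)%nat -> tpt tau (n - 1) <= t <= tpt tau n ->
  Pcons T N p tau PN P0 (T - t) k = PN k + rsum (N - n) (fun i => p (S n + i)%nat k * tau (S n + i)%nat) +
    p n k * (tpt tau n - t) + (if Rlt_dec (T - t) T then 0 else P0 k).
Proof.
  intros Hn Ht. unfold Pcons.
  replace N with ((n - 1) + S (N - n))%nat at 1 by lia.
  rewrite rsum_add, rsum_shift.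
  rewrite (rsum_zero (n - 1)).
  2:{ intros i Hi. rewrite ov_left. ring.
      assert (tpt tau (S i) <= T) by (apply tpt_range; lia). lra.
      assert (tpt tau (S i) <= tpt tau (n - 1)) by (apply tpt_mono; lia). lra. }
  rewrite (rsum_ext (N - n) _ (fun i => p (S n + i)%nat k * tau (S n + i)%nat)).
  2:{ intros i Hi. replace (n - 1 + S i)%nat with (n + i)%nat by lia.
      rewrite ov_right. replace (S n + i)%nat with (S (n + i)) by lia. rewrite tpt_S. ring.
      assert (tpt tau (S (n + i)) <= T) by (apply tpt_range; lia).
      assert (tpt tau (n + i) <= tpt tau (S (n + i))) by (apply tpt_mono; lia). lra.
      assert (tpt tau n <= tpt tau (n + i)) by (apply tpt_mono; lia). lra. }
  replace (n - 1 + 0)%nat with (n - 1)%nat by lia.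
  replace (S (n - 1)) with n by lia.
  rewrite ov_mid. ring.
  assert (tpt tau n <= T) by (apply tpt_range; lia). lra. lra.
Qed.


Hypothesis Hbs : base_sequence K J A b c N Ks Js u xd p qd v K0 J0 KN1 JN1.
Hypothesis Hsys : bs_system K J A beta gamma T N xd qd v K0 J0 KN1 JN1 U0 UN x0 XN P0 PN qN Q0 tau.

Lemma Bn n : (1 <= n <= N)%nat ->
  primal_basic_sol K J A b (Ks n) (Js n) (u n) (xd n) /\ dual_basic_sol K J A c (Ks n) (Js n) (p n) (qd n) /\ admissible K J (u n) (p n).
Proof. intros Hn. destruct Hbs as [_ [H _]]. destruct (H n Hn) as [_ [? [? ?]]]. auto. Qed.

Lemma prim n k : (1 <= n <= N)%nat -> (k < K)%nat -> rsum J (fun j => A k j * u n j) + xd n k = b k.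
Proof. intros Hn Hk. destruct (Bn n Hn) as [[H _] _]. auto. Qed.
Lemma prim_u n j : (1 <= n <= N)%nat -> (j < J)%nat -> Js n j = true -> u n j = 0.
Proof. intros Hn Hj. destruct (Bn n Hn) as [[_ [H _]] _]. auto. Qed.
Lemma prim_x n k : (1 <= n <= N)%nat -> (k < K)%nat -> Ks n k = false -> xd n k = 0.
Proof. intros Hn Hk. destruct (Bn n Hn) as [[_ [_ H]] _]. auto. Qed.
Lemma dualb n j : (1 <= n <= N)%nat -> (j < J)%nat -> rsum K (fun k => A k j * p n k) - qd n j = c j.
Proof. intros Hn Hj. destruct (Bn n Hn) as [_ [[H _] _]]. auto. Qed.
Lemma dual_p n k : (1 <= n <= N)%nat -> (k < K)%nat -> Ks n k = true -> p n k = 0.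
Proof. intros Hn Hk. destruct (Bn n Hn) as [_ [[_ [H _]] _]]. auto. Qed.
Lemma dual_q n j : (1 <= n <= N)%nat -> (j < J)%nat -> Js n j = false -> qd n j = 0.
Proof. intros Hn Hj. destruct (Bn n Hn) as [_ [[_ [_ H]] _]]. auto. Qed.
Lemma adm_u n j : (1 <= n <= N)%nat -> (j < J)%nat -> 0 <= u n j.
Proof. intros Hn Hj. destruct (Bn n Hn) as [_ [_ [H _]]]. auto. Qed.
Lemma adm_p n k : (1 <= n <= N)%nat -> (k < K)%nat -> 0 <= p n k.
Proof. intros Hn Hk. destruct (Bn n Hn) as [_ [_ [_ H]]]. auto. Qed.

Lemma Xform n t k : (1 <= n <= N)%nat -> tpt tau (n - 1) <= t <= tpt tau n -> (k < K)%nat ->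
  Xs J A beta b T (Ucons T N u tau U0 UN) t k =
  xstate x0 xd tau (n - 1) k + xd n k * (t - tpt tau (n - 1)) -
  (if Rlt_dec t T then 0 else rsum J (fun j => A k j * UN j)).
Proof.
  intros Hn Ht Hk.
  destruct Hsys as (Ha & Hb & Hc1 & Hc2 & Hc3 & Hc4 & Hc5 & Hc6 & Hc7 & Hc8 & Hd1 & Hd2 & He1 & He2).
  unfold Xs, gP.
  set (w := t - tpt tau (n - 1)).
  set (jm := if Rlt_dec t T then 0 else rsum J (fun j => A k j * UN j)).
  rewrite (rsum_ext J _ (fun j => A k j * U0 j + rsum (n - 1) (fun i => tau (S i) * (A k j * u (S i) j)) +
      w * (A k j * u n j) + (if Rlt_dec t T then 0 else A k j * UN j))).
  2:{ intros j Hj. rewrite (EvU n t j Hn Ht). fold w.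
      rewrite (rsum_ext (n - 1) (fun i => tau (S i) * (A k j * u (S i) j)) (fun i => A k j * (u (S i) j * tau (S i))))
        by (intros; ring). rewrite rsum_scal.
      destruct (Rlt_dec t T); ring. }
  rewrite !rsum_plus.
  assert (E1 : rsum J (fun j => if Rlt_dec t T then 0 else A k j * UN j) = jm).
  { unfold jm. destruct (Rlt_dec t T); auto. apply rsum_zero; auto. }
  assert (E2 : rsum J (fun j => w * (A k j * u n j)) = w * (b k - xd n k)).
  { rewrite rsum_scal. rewrite <- (prim n k Hn Hk). ring. }
  assert (E3 : rsum J (fun j => rsum (n - 1) (fun i => tau (S i) * (A k j * u (S i) j))) =
     b k * tpt tau (n - 1) - rsum (n - 1) (fun i => xd (S i) k * tau (S i))).
  { rewrite rsum_swap. unfold tpt. rewrite <- rsum_scal, <- rsum_minus. apply rsum_ext; intros i Hi.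
    rewrite rsum_scal. rewrite <- (prim (S i) k ltac:(lia) Hk). ring. }
  rewrite E1, E2, E3. specialize (Hd1 k Hk).
  unfold xstate. unfold w. replace (T - (T - t)) with t by ring. lra.
Qed.

Lemma Qform n t j : (1 <= n <= N)%nat -> tpt tau (n - 1) <= t <= tpt tau n -> (j < J)%nat ->
  Qs K A gamma c T (Pcons T N p tau PN P0) t j =
  qstate N qN qd tau n j + qd n j * (tpt tau n - t) +
  (if Rlt_dec (T - t) T then 0 else rsum K (fun k => A k j * P0 k)).
Proof.
  intros Hn Ht Hj.
  destruct Hsys as (Ha & Hb & Hc1 & Hc2 & Hc3 & Hc4 & Hc5 & Hc6 & Hc7 & Hc8 & Hd1 & Hd2 & He1 & He2).
  unfold Qs, fU.
  set (w := tpt tau n - t).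
  set (jm := if Rlt_dec (T - t) T then 0 else rsum K (fun k => A k j * P0 k)).
  rewrite (rsum_ext K _ (fun k => A k j * PN k + rsum (N - n) (fun i => tau (S n + i)%nat * (A k j * p (S n + i)%nat k)) +
      w * (A k j * p n k) + (if Rlt_dec (T - t) T then 0 else A k j * P0 k))).
  2:{ intros k Hk. rewrite (EvP n t k Hn Ht). fold w.
      rewrite (rsum_ext (N - n) (fun i => tau (S n + i)%nat * (A k j * p (S n + i)%nat k))
         (fun i => A k j * (p (S n + i)%nat k * tau (S n + i)%nat))) by (intros; ring). rewrite rsum_scal.
      destruct (Rlt_dec (T - t) T); ring. }
  rewrite !rsum_plus.
  assert (E1 : rsum K (fun k => if Rlt_dec (T - t) T then 0 else A k j * P0 k) = jm).
  { unfold jm. destruct (Rlt_dec (T - t) T); auto. apply rsum_zero; auto. }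
  assert (E2 : rsum K (fun k => w * (A k j * p n k)) = w * (c j + qd n j)).
  { rewrite rsum_scal. rewrite <- (dualb n j Hn Hj). ring. }
  assert (E3 : rsum K (fun k => rsum (N - n) (fun i => tau (S n + i)%nat * (A k j * p (S n + i)%nat k))) =
     c j * rsum (N - n) (fun i => tau (S n + i)%nat) + rsum (N - n) (fun i => qd (S n + i)%nat j * tau (S n + i)%nat)).
  { rewrite rsum_swap. rewrite <- rsum_scal, <- rsum_plus. apply rsum_ext; intros i Hi.
    rewrite rsum_scal. rewrite <- (dualb (S n + i) j ltac:(lia) Hj). ring. }
  rewrite E1, E2, E3. specialize (Hd2 j Hj).
  pose proof (tpt_tail n ltac:(lia)) as Tl.
  unfold qstate. unfold w. 
  replace (T - t) with (rsum (N - n) (fun i => tau (S n + i)%nat) + (tpt tau n - t)) by lra.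
  ring_simplify. lra.
Qed.

Hypothesis HU : forall j, (j < J)%nat -> 0 <= U0 j /\ 0 <= UN j /\ 0 <= qN j /\ 0 <= Q0 j.
Hypothesis HX : forall k, (k < K)%nat -> 0 <= x0 k /\ 0 <= XN k /\ 0 <= P0 k /\ 0 <= PN k.
Hypothesis Hxs : forall n k, (n <= N)%nat -> (k < K)%nat -> 0 <= xstate x0 xd tau n k.
Hypothesis Hqs : forall n j, (n <= N)%nat -> (j < J)%nat -> 0 <= qstate N qN qd tau n j.

Lemma pivot_leave Ks1 Js1 Ks2 Js2 w y : pivot K J Ks1 Js1 Ks2 Js2 w -> in_range K J y ->
  is_basic K J Ks1 Js1 y -> ~ is_basic K J Ks2 Js2 y -> y = w.
Proof.
  intros [_ [_ [w' [_ [Hn1 [_ Hall]]]]]] Hr H1 H2.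
  destruct (classic (y = w)) as [|Hyw]; auto.
  destruct (classic (y = w')) as [->|Hyw']; [contradiction|].
  exfalso. apply H2. apply (Hall y Hr Hyw Hyw'). auto.
Qed.

Lemma xstate_S m k : xstate x0 xd tau (S m) k = xstate x0 xd tau m k + xd (S m) k * tau (S m).
Proof. unfold xstate; simpl; ring. Qed.

Lemma qstate_S n j : (n < N)%nat ->
  qstate N qN qd tau n j = qstate N qN qd tau (S n) j + qd (S n) j * tau (S n).
Proof.
  intros Hn. unfold qstate. replace (N - n)%nat with (S (N - S n)) by lia.
  rewrite rsum_shift. rewrite Nat.add_0_r.
  rewrite (rsum_ext (N - S n) (fun i => qd (S n + S i)%nat j * tau (S n + S i)%nat)
     (fun i => qd (S (S n) + i)%nat j * tau (S (S n) + i)%nat)) by (intros; replace (S n + S i)%nat with (S (S n) + i)%nat by lia; reflexivity).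
  ring.
Qed.

Lemma CSx n k : (1 <= n <= N)%nat -> (k < K)%nat -> Ks n k = false -> xstate x0 xd tau (n - 1) k = 0.
Proof.
  destruct Hsys as (Ha & Hb & Hc1 & Hc2 & Hc3 & Hc4 & Hc5 & Hc6 & Hc7 & Hc8 & Hd1 & Hd2 & He1 & He2).
  destruct Hbs as (_ & _ & Hpiv & HK0 & HJN).
  induction n; intros Hn Hk HKs; [lia|].
  destruct (Nat.eq_dec n 0) as [->|Hn0].
  - simpl. unfold xstate. simpl. rewrite Rplus_0_r. apply Hc2; auto.
    destruct (K0 k) eqn:E; auto. rewrite (HK0 k Hk E) in HKs. discriminate.
  - simpl (S n - 1)%nat. rewrite Nat.sub_0_r.
    assert (Hrec : xstate x0 xd tau n k = xstate x0 xd tau (n - 1) k + xd n k * tau n).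
    { replace n with (S (n - 1)) at 1 by lia. rewrite xstate_S. replace (S (n - 1)) with n by lia. reflexivity. }
    destruct (Ks n k) eqn:E.
    + assert (Hv : VX k = v n).
      { apply (pivot_leave (Ks n) (Js n) (Ks (S n)) (Js (S n))); simpl; auto.
        apply Hpiv; lia. intros [_ H]. rewrite H in HKs; discriminate. }
      destruct (Ha n ltac:(lia)) as [Hx _]. apply Hx; auto.
    + rewrite Hrec, (IHn ltac:(lia) Hk eq_refl), (prim_x n k ltac:(lia) Hk E). ring.
Qed.

Lemma CSq n j : (1 <= n <= N)%nat -> (j < J)%nat -> Js n j = false -> qstate N qN qd tau n j = 0.
Proof.
  destruct Hsys as (Ha & Hb & Hc1 & Hc2 & Hc3 & Hc4 & Hc5 & Hc6 & Hc7 & Hc8 & Hd1 & Hd2 & He1 & He2).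
  destruct Hbs as (_ & _ & Hpiv & HK0 & HJN).
  assert (G : forall d n, (n + d = N)%nat -> (1 <= n)%nat -> Js n j = false -> (j < J)%nat ->
     qstate N qN qd tau n j = 0).
  { induction d; intros n0 Hd H1 HJs Hj.
    - rewrite Nat.add_0_r in Hd. subst. unfold qstate. rewrite Nat.sub_diag. simpl. rewrite Rplus_0_r.
      apply Hc6; auto. destruct (JN1 j) eqn:E; auto. rewrite (HJN j Hj E) in HJs; discriminate.
    - rewrite qstate_S by lia.
      destruct (Js (S n0) j) eqn:E.
      + assert (Hv : VU j = v n0).
        { apply (pivot_leave (Ks n0) (Js n0) (Ks (S n0)) (Js (S n0))); simpl; auto.
          apply Hpiv; lia. intros [_ H]. rewrite H in E; discriminate. }
        destruct (Ha n0 ltac:(lia)) as [_ Hq]. rewrite <- qstate_S by lia. apply Hq; auto.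
      + rewrite (IHd (S n0) ltac:(lia) ltac:(lia) E Hj). rewrite (dual_q (S n0) j ltac:(lia) Hj E). ring. }
  intros Hn Hj HJs. apply (G (N - n)%nat n); auto; lia.
Qed.

Lemma tptN1 : tpt tau (N - 1) + tau N = T.
Proof. rewrite <- tpt_NT. replace (tpt tau N) with (tpt tau (S (N - 1))) by (f_equal; lia).
  rewrite tpt_S. replace (S (N - 1)) with N by lia. reflexivity. Qed.

Lemma I1_0 : tpt tau (1 - 1) <= 0 <= tpt tau 1.
Proof. simpl (1 - 1)%nat. split; [unfold tpt; simpl; lra|]. apply tpt_range; lia. Qed.

Lemma IN_T : tpt tau (N - 1) <= T <= tpt tau N.
Proof. rewrite tpt_NT. split; [apply tpt_range; lia|lra]. Qed.

Lemma Xs_0 k : (k < K)%nat -> Xs J A beta b T (Ucons T N u tau U0 UN) 0 k = x0 k.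
Proof.
  intros Hk. rewrite (Xform 1 0 k ltac:(lia) I1_0 Hk). simpl (1 - 1)%nat.
  unfold xstate, tpt; simpl. destruct (Rlt_dec 0 T); [|lra]. ring.
Qed.

Lemma Xs_T k : (k < K)%nat -> Xs J A beta b T (Ucons T N u tau U0 UN) T k = XN k.
Proof.
  intros Hk. rewrite (Xform N T k ltac:(lia) IN_T Hk).
  destruct (Rlt_dec T T); [lra|].
  destruct Hsys as (Ha & Hb & Hc1 & Hc2 & Hc3 & Hc4 & Hc5 & Hc6 & Hc7 & Hc8 & Hd1 & Hd2 & He1 & He2).
  specialize (He1 k Hk).
  assert (xstate x0 xd tau N k = xstate x0 xd tau (N - 1) k + xd N k * tau N).
  { replace N with (S (N - 1)) at 1 by lia. rewrite xstate_S. replace (S (N - 1)) with N by lia. reflexivity. }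
  pose proof tptN1. replace (T - tpt tau (N - 1)) with (tau N) by lra. lra.
Qed.

Lemma Qs_0 j : (j < J)%nat -> Qs K A gamma c T (Pcons T N p tau PN P0) 0 j = Q0 j.
Proof.
  intros Hj. rewrite (Qform 1 0 j ltac:(lia) I1_0 Hj).
  destruct (Rlt_dec (T - 0) T); [lra|].
  destruct Hsys as (Ha & Hb & Hc1 & Hc2 & Hc3 & Hc4 & Hc5 & Hc6 & Hc7 & Hc8 & Hd1 & Hd2 & He1 & He2).
  specialize (He2 j Hj). rewrite (qstate_S 0 j ltac:(lia)) in He2.
  replace (tpt tau 1) with (tau 1) by (unfold tpt; simpl; ring). lra.
Qed.

Lemma Qs_T j : (j < J)%nat -> Qs K A gamma c T (Pcons T N p tau PN P0) T j = qN j.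
Proof.
  intros Hj. rewrite (Qform N T j ltac:(lia) IN_T Hj). rewrite tpt_NT.
  destruct (Rlt_dec (T - T) T); [|lra].
  unfold qstate. rewrite Nat.sub_diag. simpl. ring.
Qed.

Lemma U_0 j : Ucons T N u tau U0 UN 0 j = U0 j.
Proof.
  rewrite (EvU 1 0 j ltac:(lia) I1_0). unfold tpt; simpl. destruct (Rlt_dec 0 T); [ring|lra].
Qed.

Lemma P_0 k : Pcons T N p tau PN P0 (T - T) k = PN k.
Proof.
  rewrite (EvP N T k ltac:(lia) IN_T). rewrite Nat.sub_diag, tpt_NT. simpl.
  destruct (Rlt_dec (T - T) T); [ring|lra].
Qed.

Lemma conv_nonneg x0' d w t : 0 <= x0' -> 0 <= x0' + d * w -> 0 <= t <= w -> 0 <= x0' + d * t.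
Proof. intros H1 H2 [H3 H4]. destruct (Rle_lt_dec 0 d). - assert (0 <= d * t) by (apply Rmult_le_pos; auto). lra. - assert (0 <= (- d) * (w - t)) by (apply Rmult_le_pos; lra). nra. Qed.

Lemma Xs_nonneg t k : 0 <= t <= T -> (k < K)%nat -> 0 <= Xs J A beta b T (Ucons T N u tau U0 UN) t k.
Proof.
  intros Ht Hk. destruct (Rlt_dec t T) as [Hlt|Hge].
  - destruct (find_interval t Ht) as [n [Hn Hi]].
    rewrite (Xform n t k Hn Hi Hk). destruct (Rlt_dec t T); [|lra]. rewrite Rminus_0_r.
    assert (Hrec : xstate x0 xd tau n k = xstate x0 xd tau (n - 1) k + xd n k * tau n).
    { replace n with (S (n - 1)) at 1 by lia. rewrite xstate_S. replace (S (n - 1)) with n by lia. reflexivity. }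
    assert (tpt tau n = tpt tau (n - 1) + tau n).
    { replace n with (S (n - 1)) at 1 by lia. rewrite tpt_S. replace (S (n - 1)) with n by lia. reflexivity. }
    apply (conv_nonneg _ _ (tau n)).
    + apply Hxs; lia.
    + rewrite <- Hrec. apply Hxs; lia.
    + lra.
  - replace t with T by lra. rewrite Xs_T by auto. apply HX; auto.
Qed.

Lemma Qs_nonneg t j : 0 <= t <= T -> (j < J)%nat -> 0 <= Qs K A gamma c T (Pcons T N p tau PN P0) t j.
Proof.
  intros Ht Hj. destruct (Rlt_dec 0 t) as [Hlt|Hge].
  - destruct (find_interval t Ht) as [n [Hn Hi]].
    rewrite (Qform n t j Hn Hi Hj). destruct (Rlt_dec (T - t) T); [|lra]. rewrite Rplus_0_r.
    assert (Hrec : qstate N qN qd tau (n - 1) j = qstate N qN qd tau n j + qd n j * tau n).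
    { rewrite qstate_S by lia. replace (S (n - 1)) with n by lia. reflexivity. }
    assert (tpt tau n = tpt tau (n - 1) + tau n).
    { replace n with (S (n - 1)) at 1 by lia. rewrite tpt_S. replace (S (n - 1)) with n by lia. reflexivity. }
    apply (conv_nonneg _ _ (tau n)).
    + apply Hqs; lia.
    + rewrite <- Hrec. apply Hqs; lia.
    + lra.
  - replace t with 0 by lra. rewrite Qs_0 by auto. apply HU; auto.
Qed.

Lemma U_feas : MCLP_feasible K J A beta b T (Ucons T N u tau U0 UN).
Proof.
  change (Ucons T N u tau U0 UN) with (PL T N u (tpt tau) (fun i => tpt tau (S i)) U0 UN).
  split; [|split; [|split]].
  - apply PL_nonneg. intros; apply adm_u; auto. intros j Hj; destruct (HU j Hj) as [? [? _]]; auto.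
  - apply PL_nondecr. intros; apply adm_u; auto. intros j Hj; destruct (HU j Hj) as [? [? _]]; auto.
  - apply PL_rcont.
  - intros t k Ht Hk. pose proof (Xs_nonneg t k Ht Hk) as H. unfold Xs, gP in H.
    replace (T - (T - t)) with t in H by ring.
    change (PL T N u (tpt tau) (fun i => tpt tau (S i)) U0 UN) with (Ucons T N u tau U0 UN). lra.
Qed.

Lemma P_feas : MCLPd_feasible K J A gamma c T (Pcons T N p tau PN P0).
Proof.
  split; [|split; [|split]].
  - apply PL_nonneg. intros; apply adm_p; auto. intros k Hk; destruct (HX k Hk) as [_ [_ [? ?]]]; auto.
  - apply PL_nondecr. intros; apply adm_p; auto. intros k Hk; destruct (HX k Hk) as [_ [_ [? ?]]]; auto.
  - apply PL_rcont.
  - intros s j Hs Hj. pose proof (Qs_nonneg (T - s) j ltac:(lra) Hj) as H. unfold Qs, fU in H.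
    replace (T - (T - s)) with s in H by ring. unfold Pcons in H |- *. unfold Pcons. lra.
Qed.

Definition bps (M : nat) (i : nat) : R :=
  tpt tau (i / M) + INR (i mod M) / INR M * tau (S (i / M)).

Lemma bps_formula M i q r : (0 < M)%nat -> (r < M)%nat -> i = (M * q + r)%nat ->
  bps M i = tpt tau q + INR r / INR M * tau (S q).
Proof.
  intros HM Hr Hi. unfold bps.
  rewrite <- (Nat.div_unique i M q r Hr Hi), <- (Nat.mod_unique i M q r Hr Hi). reflexivity.
Qed.

Lemma bps_step M i : (0 < M)%nat -> (i < N * M)%nat ->
  (i / M < N)%nat /\ bps M i = tpt tau (i / M) + INR (i mod M) / INR M * tau (S (i / M)) /\
  bps M (S i) = tpt tau (i / M) + INR (S (i mod M)) / INR M * tau (S (i / M)) /\ (i mod M < M)%nat.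
Proof.
  intros HM Hi. pose proof (Nat.div_mod_eq i M) as E. pose proof (Nat.mod_upper_bound i M ltac:(lia)) as Hr.
  set (q := (i / M)%nat) in *. set (r := (i mod M)%nat) in *.
  assert (Hq : (q < N)%nat) by nia.
  split; [auto|]. split; [reflexivity|]. split; [|auto].
  assert (HMR : 0 < INR M) by (apply lt_0_INR; lia).
  destruct (Nat.eq_dec (S r) M) as [Heq|Hne].
  - rewrite (bps_formula M (S i) (S q) 0 HM HM ltac:(lia)).
    rewrite tpt_S. rewrite Heq. simpl INR. unfold Rdiv. rewrite Rmult_0_l, Rinv_r by lra. ring.
  - apply (bps_formula M (S i) q (S r) HM ltac:(lia) ltac:(lia)).
Qed.

Lemma bp_part d : d > 0 -> exists m s, tagged_partition 0 T m s (fun i => s (S i)) d /\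
  forall i, (i < m)%nat -> exists n, (1 <= n <= N)%nat /\ tpt tau (n - 1) <= s i /\ s i <= s (S i) /\
     s (S i) <= tpt tau n.
Proof.
  intros Hd. destruct (archimed_cor1 (d / T)) as [M [HM HM0]].
  { apply Rdiv_lt_0_compat; lra. }
  assert (HMR : 0 < INR M) by (apply lt_0_INR; lia).
  assert (HTM : T / INR M < d).
  { apply (Rmult_lt_reg_r (/ T)). apply Rinv_0_lt_compat; lra.
    replace (T / INR M * / T) with (/ INR M) by (field; lra). exact HM. }
  assert (Step : forall i, (i < N * M)%nat -> exists n, (1 <= n <= N)%nat /\ tpt tau (n - 1) <= bps M i /\
     bps M i <= bps M (S i) /\ bps M (S i) <= tpt tau n /\ bps M (S i) - bps M i < d).
  { intros i Hi. destruct (bps_step M i HM0 Hi) as [Hq [E1 [E2 Hr]]].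
    set (q := (i / M)%nat) in *. set (r := (i mod M)%nat) in *.
    exists (S q). simpl (S q - 1)%nat. rewrite Nat.sub_0_r. rewrite E1, E2.
    assert (Ht : 0 <= tau (S q)) by (apply Htau; lia).
    assert (Hr1 : 0 <= INR r / INR M) by (unfold Rdiv; apply Rmult_le_pos; [apply pos_INR| left; apply Rinv_0_lt_compat; lra]).
    assert (Hr2 : INR (S r) / INR M <= 1).
    { apply (Rmult_le_reg_r (INR M)); auto. unfold Rdiv. rewrite Rmult_assoc, Rinv_l by lra. rewrite Rmult_1_l, Rmult_1_r.
      apply le_INR; lia. }
    assert (Hr3 : INR (S r) / INR M = INR r / INR M + / INR M) by (rewrite S_INR; field; lra).
    assert (HtT : tau (S q) <= T).
    { pose proof (tpt_range (S q) ltac:(lia)). pose proof (tpt_range q ltac:(lia)). rewrite tpt_S in *. lra. }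
    assert (Hinv : 0 < / INR M) by (apply Rinv_0_lt_compat; lra).
    split; [lia|]. split; [|split; [|split]].
    - assert (0 <= INR r / INR M * tau (S q)) by (apply Rmult_le_pos; auto). lra.
    - rewrite Hr3. assert (0 <= / INR M * tau (S q)) by (apply Rmult_le_pos; lra). nra.
    - rewrite tpt_S. assert (INR (S r) / INR M * tau (S q) <= 1 * tau (S q)) by (apply Rmult_le_compat_r; auto). lra.
    - rewrite Hr3. assert (/ INR M * tau (S q) <= / INR M * T) by (apply Rmult_le_compat_l; lra).
      replace (/ INR M * T) with (T / INR M) in H by (unfold Rdiv; ring). nra. }
  exists (N * M)%nat, (bps M). split; [split; [|split]|].
  - unfold bps. rewrite Nat.Div0.div_0_l, Nat.Div0.mod_0_l by lia. simpl. unfold tpt; simpl. unfold Rdiv; ring.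
  - rewrite (bps_formula M (N * M) N 0 HM0 HM0 ltac:(lia)). rewrite tpt_NT. simpl. unfold Rdiv; ring.
  - intros i Hi. destruct (Step i Hi) as [n [_ [_ [? [_ ?]]]]]. split; [split; lra|lra].
  - intros i Hi. destruct (Step i Hi) as [n [? [? [? [? _]]]]]. exists n; auto.
Qed.

Lemma csq n t j : (1 <= n <= N)%nat -> (j < J)%nat ->
  u n j * (qstate N qN qd tau n j + qd n j * t) = 0.
Proof.
  intros Hn Hj. destruct (Js n j) eqn:E.
  - rewrite (prim_u n j Hn Hj E). ring.
  - rewrite (CSq n j Hn Hj E), (dual_q n j Hn Hj E). ring.
Qed.

Lemma csx n t k : (1 <= n <= N)%nat -> (k < K)%nat ->
  p n k * (xstate x0 xd tau (n - 1) k + xd n k * t) = 0.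
Proof.
  intros Hn Hk. destruct (Ks n k) eqn:E.
  - rewrite (dual_p n k Hn Hk E). ring.
  - rewrite (CSx n k Hn Hk E), (prim_x n k Hn Hk E). ring.
Qed.

Lemma zero_gap m s d : tagged_partition 0 T m s (fun i => s (S i)) d ->
  (forall i, (i < m)%nat -> exists n, (1 <= n <= N)%nat /\ tpt tau (n - 1) <= s i /\ s i <= s (S i) /\
     s (S i) <= tpt tau n) ->
  Gap1 K J A gamma c T (Ucons T N u tau U0 UN) (Pcons T N p tau PN P0) m s = 0 /\
  Gap2 K J A beta b T (Ucons T N u tau U0 UN) (Pcons T N p tau PN P0) m s = 0.
Proof.
  intros Hp Hint. pose proof Hp as [H0 [Hm _]].
  destruct Hsys as (Ha & Hb & Hc1 & Hc2 & Hc3 & Hc4 & Hc5 & Hc6 & Hc7 & Hc8 & Hd1 & Hd2 & He1 & He2).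
  split.
  - unfold Gap1. rewrite (rsum_zero J), (rsum_zero m); [ring| |].
    + intros i Hi. apply rsum_zero. intros j Hj.
      destruct (Hint i Hi) as [n [Hn [Hi1 [Hi2 Hi3]]]].
      set (t1 := s i) in *. set (t2 := s (S i)) in *.
      destruct (Req_dec t1 t2) as [Heq|Hne]. { rewrite Heq. ring. }
      assert (Ht2 : tpt tau (n - 1) <= t2 <= tpt tau n) by lra.
      assert (Ht1 : tpt tau (n - 1) <= t1 <= tpt tau n) by lra.
      assert (HnT : tpt tau n <= T) by (apply tpt_range; lia).
      assert (Hn0 : 0 <= tpt tau (n - 1)) by (apply tpt_range; lia).
      rewrite (EvU n t2 j Hn Ht2), (EvU n t1 j Hn Ht1).
      destruct (Rlt_dec t1 T); [|lra].
      assert (F1 : Qs K A gamma c T (Pcons T N p tau PN P0) t2 j = qstate N qN qd tau n j + qd n j * (tpt tau n - t2)).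
      { rewrite (Qform n t2 j Hn Ht2 Hj). destruct (Rlt_dec (T - t2) T); [ring|lra]. }
      assert (C1 : Qs K A gamma c T (Pcons T N p tau PN P0) t2 j * u n j = 0).
      { rewrite F1, Rmult_comm. apply csq; auto. }
      destruct (Rlt_dec t2 T).
      * transitivity (Qs K A gamma c T (Pcons T N p tau PN P0) t2 j * u n j * (t2 - t1)); [ring|].
        rewrite C1; ring.
      * assert (t2 = T) by lra.
        assert (C2 : Qs K A gamma c T (Pcons T N p tau PN P0) t2 j * UN j = 0).
        { replace t2 with T by lra. rewrite Qs_T by auto. destruct (JN1 j) eqn:E.
          - rewrite (Hc7 j Hj E); ring. - rewrite (Hc6 j Hj E); ring. }
        transitivity (Qs K A gamma c T (Pcons T N p tau PN P0) t2 j * u n j * (t2 - t1) +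
          Qs K A gamma c T (Pcons T N p tau PN P0) t2 j * UN j); [ring|].
        rewrite C1, C2; ring.
    + intros j Hj. rewrite Qs_0, U_0 by auto. destruct (J0 j) eqn:E.
      * rewrite (Hc1 j Hj E); ring. * rewrite (Hc4 j Hj E); ring.
  - unfold Gap2. apply rsum_zero. intros k Hk.
    rewrite (rsum_zero m).
    + rewrite Hm, P_0, Xs_T by auto. destruct (KN1 k) eqn:E.
      * rewrite (Hc5 k Hk E); ring. * rewrite (Hc8 k Hk E); ring.
    + intros i Hi.
      destruct (Hint i Hi) as [n [Hn [Hi1 [Hi2 Hi3]]]].
      set (t1 := s i) in *. set (t2 := s (S i)) in *.
      destruct (Req_dec t1 t2) as [Heq|Hne]. { rewrite Heq. ring. }
      assert (Ht2 : tpt tau (n - 1) <= t2 <= tpt tau n) by lra.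
      assert (Ht1 : tpt tau (n - 1) <= t1 <= tpt tau n) by lra.
      assert (HnT : tpt tau n <= T) by (apply tpt_range; lia).
      assert (Hn0 : 0 <= tpt tau (n - 1)) by (apply tpt_range; lia).
      rewrite (EvP n t2 k Hn Ht2), (EvP n t1 k Hn Ht1).
      destruct (Rlt_dec (T - t2) T); [|lra].
      assert (F1 : Xs J A beta b T (Ucons T N u tau U0 UN) t1 k = xstate x0 xd tau (n - 1) k + xd n k * (t1 - tpt tau (n - 1))).
      { rewrite (Xform n t1 k Hn Ht1 Hk). destruct (Rlt_dec t1 T); [ring|lra]. }
      assert (C1 : p n k * Xs J A beta b T (Ucons T N u tau U0 UN) t1 k = 0).
      { rewrite F1. apply csx; auto. }
      destruct (Rlt_dec (T - t1) T).
      * transitivity (p n k * Xs J A beta b T (Ucons T N u tau U0 UN) t1 k * (t2 - t1)); [ring|].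
        rewrite C1; ring.
      * assert (t1 = 0) by (pose proof (part_range _ _ _ _ _ Hp i ltac:(lia)) as Hr; fold t1 in Hr; lra).
        assert (C2 : P0 k * Xs J A beta b T (Ucons T N u tau U0 UN) t1 k = 0).
        { replace t1 with 0 by lra. rewrite Xs_0 by auto. destruct (K0 k) eqn:E.
          - rewrite (Hc3 k Hk E); ring. - rewrite (Hc2 k Hk E); ring. }
        transitivity (p n k * Xs J A beta b T (Ucons T N u tau U0 UN) t1 k * (t2 - t1) +
          P0 k * Xs J A beta b T (Ucons T N u tau U0 UN) t1 k); [ring|].
        rewrite C1, C2; ring.
Qed.

End Spec.


Theorem mainTheorem1
  (K J : nat) (A : nat -> nat -> R) (beta b gamma c : nat -> R) (T : R)
  (N : nat) (Ks Js : nat -> nat -> bool) (u xd p qd : nat -> nat -> R)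
  (v : nat -> pvar) (K0 J0 KN1 JN1 : nat -> bool)
  (U0 UN x0 XN P0 PN qN Q0 tau : nat -> R) :
  T > 0 ->
  nondegenerate_I K J A b c ->
  base_sequence K J A b c N Ks Js u xd p qd v K0 J0 KN1 JN1 ->
  bs_system K J A beta gamma T N xd qd v K0 J0 KN1 JN1 U0 UN x0 XN P0 PN qN Q0 tau ->
  (forall j, (j < J)%nat -> 0 <= U0 j /\ 0 <= UN j /\ 0 <= qN j /\ 0 <= Q0 j) ->
  (forall k, (k < K)%nat -> 0 <= x0 k /\ 0 <= XN k /\ 0 <= P0 k /\ 0 <= PN k) ->
  (forall n, (1 <= n <= N)%nat -> 0 <= tau n) ->
  (forall n k, (n <= N)%nat -> (k < K)%nat -> 0 <= xstate x0 xd tau n k) ->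
  (forall n j, (n <= N)%nat -> (j < J)%nat -> 0 <= qstate N qN qd tau n j) ->
  MCLP_optimal K J A beta b gamma c T (Ucons T N u tau U0 UN) /\
  MCLPd_optimal K J A beta b gamma c T (Pcons T N p tau PN P0).
Proof.
  intros HT _ Hbs Hsys HU HX Htau Hxs Hqs.
  assert (HN : (1 <= N)%nat) by (destruct Hbs; auto).
  assert (HtN : rsum N (fun i => tau (S i)) = T) by (destruct Hsys as [_ [H _]]; auto).
  pose proof (U_feas K J A beta b gamma c T N Ks Js u xd p qd v K0 J0 KN1 JN1 U0 UN x0 XN P0 PN qN Q0 tau
    HT HN Htau HtN Hbs Hsys HU HX Hxs) as UF.
  pose proof (P_feas K J A beta b gamma c T N Ks Js u xd p qd v K0 J0 KN1 JN1 U0 UN x0 XN P0 PN qN Q0 tau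
    HT HN Htau HtN Hbs Hsys HU HX Hqs) as PF.
  assert (Hint : forall i, (i < N)%nat -> 0 <= tpt tau i /\ tpt tau i <= tpt tau (S i) /\ tpt tau (S i) <= T).
  { intros i Hi. split; [|split].
    - apply (tpt_range T N tau HT HN Htau HtN); lia.
    - apply (tpt_mono T N tau HT HN Htau HtN); lia.
    - apply (tpt_range T N tau HT HN Htau HtN); lia. }
  assert (HIU : exists I, MCLP_value J gamma c T (Ucons T N u tau U0 UN) I).
  { destruct (PL_LS J (fun t j => gamma j + (T - t) * c j) (fun j => gamma j + T * c j) (fun j => - c j)
      T N u (tpt tau) (fun i => tpt tau (S i)) U0 UN) as [I HI].
    - intros; ring.
    - auto.
    - auto.
    - exists I. exact HI. }
  assert (HIP : exists I, MCLPd_value K beta b T (Pcons T N p tau PN P0) I).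
  { destruct (PL_LS K (fun t k => beta k + (T - t) * b k) (fun k => beta k + T * b k) (fun k => - b k)
      T N p (fun i => T - tpt tau (S i)) (fun i => T - tpt tau i) PN P0) as [I HI].
    - intros; ring.
    - auto.
    - intros i Hi. destruct (Hint i Hi) as [? [? ?]]. lra.
    - exists I. exact HI. }
  destruct HIU as [IU HVU]. destruct HIP as [IP HVP].
  assert (Hle : IP <= IU).
  { pose proof HVU as [I0U [RU EU]]. pose proof HVP as [I0P [RP EP]].
    destruct (Rle_lt_dec IP IU) as [|Hlt]; auto. exfalso.
    set (eps := (IP - IU) / 3).
    assert (He : eps > 0) by (unfold eps; lra).
    destruct (RU eps He) as [d1 [Hd1 S1]]. destruct (RP eps He) as [d2 [Hd2 S2]].
    destruct (bp_part T N tau HT HN Htau HtN (Rmin d1 d2)) as [m [s [Hp Hin]]]. { apply Rmin_glb_lt; auto. }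
    specialize (S1 m s (fun i => s (S i)) (tp_mono_delta _ _ _ _ _ _ _ (Rmin_l d1 d2) Hp)).
    specialize (S2 m _ _ (rev_part _ _ _ _ (tp_mono_delta _ _ _ _ _ _ _ (Rmin_r d1 d2) Hp))).
    destruct (zero_gap K J A beta b gamma c T N Ks Js u xd p qd v K0 J0 KN1 JN1 U0 UN x0 XN P0 PN qN Q0 tau
      HT HN Htau HtN Hbs Hsys m s _ Hp Hin) as [G1 G2].
    pose proof Hp as [H0 [Hm _]].
    pose proof (disc_identity K J A beta b gamma c T (Ucons T N u tau U0 UN) (Pcons T N p tau PN P0) m s H0 Hm) as ID.
    unfold Psum, Dsum, fU, gP in ID. rewrite G1, G2 in ID.
    apply Rabs_def2 in S1. apply Rabs_def2 in S2.
    unfold eps in *. lra. }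
  split.
  - split; [exact UF|]. exists IU. split; [exact HVU|].
    intros U' I' HU' HV'.
    pose proof (weak_duality K J A beta b gamma c T U' (Pcons T N p tau PN P0) I' IP HT HU' PF HV' HVP). lra.
  - split; [exact PF|]. exists IP. split; [exact HVP|].
    intros P' I' HP' HV'.
    pose proof (weak_duality K J A beta b gamma c T (Ucons T N u tau U0 UN) P' IU I' HT UF HP' HVU HV'). lra.
Qed.
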